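(* Let $A\in {\operatorname{\mathsf{TPD}}}_n(\mathbb{S}_{\max}^\vee)$, set $\gamma_i=a_{ii}$ ordered so that $\gamma_1\succeq\cdots\succeq\gamma_n$, let $\gamma=\gamma_k$ and $B=B_k=\gamma_k I\ominus A$. Assume that $\gamma$ is a simple $\mathbb{S}_{\max}$-eigenvalue. Let \[ v^{(k)}:= (B_k)_{:,k}^{\mathrm{adj}}. \] Then we have the following properties: \begin{enumerate} \item $v^{(k)}$ is a weak $\mathbb{S}_{\max}$-eigenvector associated to $\gamma$, such that $v^{(k)}_k\in\mathbb{S}_{\max}^\vee\setminus\{\mathbf{0}\}$. \item There exists a $\mathbb{S}_{\max}$-eigenvector $v$ associated to $\gamma$ such that $|v|=|v^{(k)}|$ and $v_i=v^{(k)}_i$ for all $i\in [n]$ satisfying $v^{(k)}_i\in\mathbb{S}_{\max}^\vee$, in particular for $i=k$. \item Any $\mathbb{S}_{\max}$-eigenvector $v$ associated to $\gamma$ satisfies $v\,\nabla\, \lambda v^{(k)}$ for some $\lambda\in \mathbb{S}_{\max}^{\vee}\setminus\{\mathbf{0}\}$. \end{enumerate}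
   Context: $\mathbb{S}_{\max}$ is the symmetrized tropical semiring over a divisible totally ordered abelian group, with zero $\mathbf{0}$, unit $\mathbf{1}$, minus $\ominus$, modulus $|\cdot|$; $\mathbb{S}_{\max}^\vee$ is the set of signed elements; $a\,\nabla\, b$ iff $a\ominus b$ is balanced; $a\preceq b$ iff $b=a\oplus b$. $A\in{\operatorname{\mathsf{TPD}}}_n(\mathbb{S}_{\max}^\vee)$: $A$ symmetric with signed entries, $\mathbf{0}<a_{ii}$ and $a_{ij}^2<a_{ii}a_{jj}$ for $i\ne j$ (where $a<b$ iff $b\ominus a$ is positive). Its $\mathbb{S}_{\max}$-eigenvalues are its diagonal entries; $\gamma_k$ simple means it occurs once on the diagonal. $(M^{\mathrm{adj}})_{ij}=(\ominus\mathbf{1})^{i+j}\det M[\hat j,\hat i]$ (signed determinant), $M_{:,k}$ the $k$-th column. An $\mathbb{S}_{\max}$-eigenvector for $\gamma$ is $v\in(\mathbb{S}_{\max}^\vee)^n\setminus\{\mathbf{0}\}$ with $Av\,\nabla\,\gamma v$; a weak $\mathbb{S}_{\max}$-eigenvector is $v\in\mathbb{S}_{\max}^n$ with at least one coordinate in $\mathbb{S}_{\max}^\vee\setminus\{\mathbf{0}\}$ and $Av\,\nabla\,\gamma v$. *)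

(* Defs.v *)
From HB Require Import structures.
From mathcomp Require Import all_boot all_order all_algebra all_fingroup.
Set Implicit Arguments. Unset Strict Implicit. Unset Printing Implicit Defensive.
Import Order.TTheory GRing.Theory Num.Theory.
Local Open Scope ring_scope.

Definition divOAG (G : porderZmodType) : Prop :=
  [/\ (forall x y : G, (x <= y) || (y <= x)),
      (forall x y z : G, x <= y -> x + z <= y + z) &
      (forall (m : nat) (x : G), (0 < m)%N -> exists y : G, y *+ m = x)].

(* Elements of S_max: 0 (= -oo), a (positive), (-)a (negative), a^. (balanced),
   for a in G. *)
Inductive smax (G : Type) : Type :=
  | SZero | SPos of G | SNeg of G | SBal of G.
Arguments SZero {G}.

Section Smax.
Variable G : porderZmodType.
Implicit Types a b : smax G.

(* modulus in G (only meaningful for non-zero elements) *)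
Definition smodg a : G :=
  match a with SZero => 0 | SPos x => x | SNeg x => x | SBal x => x end.

Definition splus a b : smax G :=
  match a, b with
  | SZero, _ => b
  | _, SZero => a
  | _, _ =>
    let x := smodg a in let y := smodg b in
    if x == y then
      match a, b with
      | SPos _, SPos _ => a
      | SNeg _, SNeg _ => a
      | _, _ => SBal x
      end
    else if x < y then b else a
  end.

Definition stimes a b : smax G :=
  match a, b with
  | SZero, _ => SZero
  | _, SZero => SZero
  | SBal x, _ => SBal (x + smodg b)
  | _, SBal y => SBal (smodg a + y)
  | SPos x, SPos y => SPos (x + y)
  | SNeg x, SNeg y => SPos (x + y)
  | SPos x, SNeg y => SNeg (x + y)
  | SNeg x, SPos y => SNeg (x + y)
  end.

Definition sone : smax G := SPos 0.

Definition sopp a : smax G :=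
  match a with SZero => SZero | SPos x => SNeg x | SNeg x => SPos x | SBal x => SBal x end.

Definition sabs a : smax G := match a with SZero => SZero | _ => SPos (smodg a) end.

Definition sbalanced a : Prop := sopp a = a.
Definition ssigned a : Prop := match a with SBal _ => False | _ => True end.
Definition spositive a : Prop := match a with SPos _ => True | _ => False end.

Definition snabla a b : Prop := sbalanced (splus a (sopp b)).
Definition slt a b : Prop := spositive (splus b (sopp a)).
Definition sle a b : Prop := b = splus a b.

Definition ssignn (m : nat) : smax G := if odd m then sopp sone else sone.

Definition sdet (m : nat) (M : 'M[smax G]_m) : smax G :=
  \big[splus/SZero]_(s : 'S_m)
     stimes (ssignn (odd_perm s)) (\big[stimes/sone]_(i < m) M i (s i)).

Definition sadj (m : nat) (M : 'M[smax G]_m) : 'M[smax G]_m :=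
  \matrix_(i < m, j < m) stimes (ssignn (i + j)) (sdet (row' j (col' i M))).

Definition smulv (m : nat) (M : 'M[smax G]_m) (v : 'I_m -> smax G) (i : 'I_m) :=
  \big[splus/SZero]_(j < m) stimes (M i j) (v j).

Definition sshift (m : nat) (g : smax G) (M : 'M[smax G]_m) : 'M[smax G]_m :=
  \matrix_(i < m, j < m) splus (if i == j then g else SZero) (sopp (M i j)).

Definition tpd (m : nat) (A : 'M[smax G]_m) : Prop :=
  [/\ (forall i j, A i j = A j i),
      (forall i j, ssigned (A i j)),
      (forall i, slt SZero (A i i)) &
      (forall i j, i != j -> slt (stimes (A i j) (A i j)) (stimes (A i i) (A j j)))].

Definition seigvec (m : nat) (A : 'M[smax G]_m) (g : smax G) (v : 'I_m -> smax G) : Prop :=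
  [/\ (forall i, ssigned (v i)), (exists i, v i <> SZero) &
      (forall i, snabla (smulv A v i) (stimes g (v i)))].

Definition sweak_eigvec (m : nat) (A : 'M[smax G]_m) (g : smax G) (v : 'I_m -> smax G) : Prop :=
  (exists i, ssigned (v i) /\ v i <> SZero) /\
  (forall i, snabla (smulv A v i) (stimes g (v i))).

End Smax.

(* Main.v *)
From HB Require Import structures.
Require Import Defs.
From mathcomp Require Import all_boot all_order all_algebra all_fingroup.
From mathcomp Require Import zify.
From Stdlib Require Import Classical ClassicalEpsilon.
Local Open Scope ring_scope.

Module Alg.
Set Implicit Arguments. Unset Strict Implicit. Unset Printing Implicit Defensive.
Import Order.TTheory GRing.Theory.
Local Open Scope ring_scope.

Section Alg.
Variable G : porderZmodType.
Hypothesis HG : divOAG G.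

Lemma totG (x y : G) : x >=< y.
Proof. by case: HG => h _ _; exact: h. Qed.

Lemma leD2r (x y z : G) : (x + z <= y + z) = (x <= y).
Proof.
case: HG => _ h _; apply/idP/idP; last exact: h.
by move=> /(h _ _ (- z)); rewrite !addrK.
Qed.

Lemma ltD2r (x y z : G) : (x + z < y + z) = (x < y).
Proof. by rewrite !lt_def leD2r (inj_eq (addIr z)). Qed.

Lemma ltD2l (x y z : G) : (z + x < z + y) = (x < y).
Proof. by rewrite ![z + _]addrC ltD2r. Qed.
Lemma leD2l (x y z : G) : (z + x <= z + y) = (x <= y).
Proof. by rewrite ![z + _]addrC leD2r. Qed.

Ltac cmp1 :=
  match goal with
  | |- context [?x == ?y] =>
      match type of x with
      | Order.POrder.sort _ => idtac
      | GRing.Zmodule.sort _ => idtac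
      | _ => idtac
      end;
      let H := fresh "H" in
      case: (comparable_ltgtP (totG x y)) => H; try subst
  end.

Ltac closelt :=
  match goal with
  | H : is_true (?a < ?a) |- _ => by rewrite ltxx in H
  | H1 : is_true (?a < ?b), H2 : is_true (?b < ?a) |- _ =>
      by move: (lt_trans H1 H2); rewrite ltxx
  | H1 : is_true (?a < ?b), H2 : is_true (?b <= ?a) |- _ =>
      by move: (lt_le_trans H1 H2); rewrite ltxx
  | H1 : is_true (?a < ?b), H2 : is_true (?b < ?c), H3 : is_true (?c < ?a) |- _ =>
      by move: (lt_trans (lt_trans H1 H2) H3); rewrite ltxx
  end.

Lemma eqD2r (x y z : G) : (x + z == y + z) = (x == y).
Proof. exact: (inj_eq (addIr z)). Qed.
Lemma eqD2l (x y z : G) : (z + x == z + y) = (x == y).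
Proof. exact: (inj_eq (addrI z)). Qed.

Ltac smx := repeat (first [done | closelt | progress simpl | progress rewrite ?eqD2r ?eqD2l ?ltD2r ?ltD2l | cmp1 | progress (intros; subst) | congruence ]).

Lemma splusC (a b : smax G) : splus a b = splus b a.
Proof. by case: a b => [|x|x|x] [|y|y|y] //=; smx. Qed.

Lemma splus0r (a : smax G) : splus a SZero = a.
Proof. by case: a. Qed.
Lemma splus0l (a : smax G) : splus SZero a = a.
Proof. by []. Qed.

Lemma splusA (a b c : smax G) : splus a (splus b c) = splus (splus a b) c.
Proof. by case: a b c => [|x|x|x] [|y|y|y] [|z|z|z] //=; smx. Qed.


Lemma stimesC (a b : smax G) : stimes a b = stimes b a.
Proof. by case: a b => [|x|x|x] [|y|y|y] //=; rewrite addrC. Qed.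

Lemma stimesA (a b c : smax G) : stimes a (stimes b c) = stimes (stimes a b) c.
Proof. by case: a b c => [|x|x|x] [|y|y|y] [|z|z|z] //=; rewrite addrA. Qed.

Lemma stimes1l (a : smax G) : stimes (sone G) a = a.
Proof. by case: a => [|x|x|x] //=; rewrite add0r. Qed.
Lemma stimes1r (a : smax G) : stimes a (sone G) = a.
Proof. by rewrite stimesC stimes1l. Qed.
Lemma stimes0l (a : smax G) : stimes SZero a = SZero.
Proof. by []. Qed.
Lemma stimes0r (a : smax G) : stimes a SZero = SZero.
Proof. by case: a. Qed.

Lemma stimesDl (a b c : smax G) :
  stimes (splus a b) c = splus (stimes a c) (stimes b c).
Proof. by case: a b c => [|x|x|x] [|y|y|y] [|z|z|z] //=; smx. Qed.

Lemma stimesDr (c a b : smax G) :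
  stimes c (splus a b) = splus (stimes c a) (stimes c b).
Proof. by rewrite !(stimesC c) stimesDl. Qed.

Lemma soppD (a b : smax G) : sopp (splus a b) = splus (sopp a) (sopp b).
Proof. by case: a b => [|x|x|x] [|y|y|y] //=; smx. Qed.

Lemma soppK (a : smax G) : sopp (sopp a) = a.
Proof. by case: a. Qed.

Lemma soppMl (a b : smax G) : stimes (sopp a) b = sopp (stimes a b).
Proof. by case: a b => [|x|x|x] [|y|y|y]. Qed.
Lemma soppMr (a b : smax G) : stimes a (sopp b) = sopp (stimes a b).
Proof. by rewrite stimesC soppMl stimesC. Qed.

#[local] HB.instance Definition _ := Monoid.isComLaw.Build (smax G) SZero (@splus G) splusA splusC splus0l.
#[local] HB.instance Definition _ := Monoid.isComLaw.Build (smax G) (sone G) (@stimes G) stimesA stimesC stimes1l.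
#[local] HB.instance Definition _ := Monoid.isMulLaw.Build (smax G) SZero (@stimes G) stimes0l stimes0r.
#[local] HB.instance Definition _ := Monoid.isAddLaw.Build (smax G) (@stimes G) (@splus G) stimesDl stimesDr.


Lemma splusxx (a : smax G) : splus a a = a.
Proof. by case: a => [|x|x|x] //=; rewrite eqxx. Qed.

Definition mle (a b : smax G) := a = SZero \/ (b <> SZero /\ smodg a <= smodg b).
Definition mlt (a b : smax G) := a = SZero \/ (b <> SZero /\ smodg a < smodg b).

Lemma mle_plusl (a b : smax G) : mle a (splus a b).
Proof.
rewrite /mle; case: a b => [|x|x|x] [|y|y|y] /=; try (by left); right;
  smx; (split; [done|]); try exact: ltW; exact: lexx.
Qed.

Lemma mle_plusr (a b : smax G) : mle b (splus a b).
Proof. by rewrite splusC; apply: mle_plusl. Qed.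

Lemma mle_refl a : mle a a.
Proof. by case: a => [|x|x|x]; [left|right..]. Qed.

Lemma mle_trans a b c : mle a b -> mle b c -> mle a c.
Proof.
move=> [->|[nb ab]]; first by left.
case=> [bz|[nc bc]]; first by [].
by right; split=> //; exact: le_trans ab bc.
Qed.

Lemma mlt_mle a b : mlt a b -> mle a b.
Proof. by case=> [->|[nb ab]]; [left|right; split=> //; exact: ltW]. Qed.

Lemma mlt_le_trans a b c : mlt a b -> mle b c -> mlt a c.
Proof.
move=> [->|[nb ab]]; first by left.
case=> [bz|[nc bc]]; first by [].
by right; split=> //; exact: lt_le_trans ab bc.
Qed.

Lemma mle_lt_trans a b c : mle a b -> mlt b c -> mlt a c.
Proof.
move=> [->|[nb ab]]; first by left.
case=> [bz|[nc bc]]; first by [].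
by right; split=> //; exact: le_lt_trans ab bc.
Qed.

Lemma mle0 a : mle a SZero -> a = SZero.
Proof. by case=> // -[]. Qed.

Lemma splus_mlt (a b : smax G) : mlt b a -> splus a b = a.
Proof.
case=> [->|[]]; first by rewrite splus0r.
case: a b => [|x|x|x] [|y|y|y] //= _ h; smx.
Qed.

Lemma splus_mle_bal (a b : smax G) : sbalanced a -> mle b a -> sbalanced (splus a b).
Proof.
rewrite /sbalanced => ha [->|[na h]]; first by rewrite splus0r.
move: ha na h; case: a b => [|x|x|x] [|y|y|y] //= ha _ h; try discriminate; smx.
Qed.

Lemma mlt_plus a b c : mlt a c -> mlt b c -> mlt (splus a b) c.
Proof.
move=> [->|[nc ac]]; first by rewrite splus0l.
move=> [->|[_ bc]]; first by rewrite splus0r; right.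
right; split=> //; case: a b ac bc => [|x|x|x] [|y|y|y] //= h1 h2; smx.
Qed.

Lemma mle_plus a b c : mle a c -> mle b c -> mle (splus a b) c.
Proof.
move=> [->|[nc ac]]; first by rewrite splus0l.
move=> [->|[_ bc]]; first by rewrite splus0r; right.
right; split=> //; case: a b ac bc => [|x|x|x] [|y|y|y] //= h1 h2; smx.
Qed.

Section Bigs.
Variable I : finType.
Variable P : pred I.
Variable f : I -> smax G.

Lemma mle_big i : P i -> mle (f i) (\big[@splus G/SZero]_(j | P j) f j).
Proof. by move=> Pi; rewrite (bigD1 i) //=; apply: mle_plusl. Qed.

Lemma mlt_big y : (forall i, P i -> mlt (f i) y) -> mlt (\big[@splus G/SZero]_(j | P j) f j) y.
Proof.
move=> h; apply: (big_rec (fun s => mlt s y)); first by left.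
by move=> i x Pi hx; apply: mlt_plus => //; apply: h.
Qed.

Lemma mle_bigl y : (forall i, P i -> mle (f i) y) -> mle (\big[@splus G/SZero]_(j | P j) f j) y.
Proof.
move=> h; apply: (big_rec (fun s => mle s y)); first by left.
by move=> i x Pi hx; apply: mle_plus => //; apply: h.
Qed.

Lemma big_attained :
  \big[@splus G/SZero]_(j | P j) f j = SZero \/
  exists i, [/\ P i, f i <> SZero & smodg (f i) = smodg (\big[@splus G/SZero]_(j | P j) f j)].
Proof.
apply: (big_rec (fun s => s = SZero \/ exists i, [/\ P i, f i <> SZero & smodg (f i) = smodg s])).
  by left.
move=> i x Pi [->|[i0 [Pi0 nz e]]].
  rewrite splus0r; case E: (f i) => [|a|a|a]; first by left.
  1-3: by right; exists i; rewrite E.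
case E: (f i) => [|a|a|a]; first by right; exists i0.
all: case: x e => [|b|b|b] //= e; right; smx;
  first [ by exists i0; split => // | by exists i; rewrite E; split => //].
Qed.

Lemma big_top_eq y i : \big[@splus G/SZero]_(j | P j) f j = y -> ssigned y ->
   P i -> f i <> SZero -> smodg (f i) = smodg y -> f i = y.
Proof.
move=> hs sy Pi nz e; move: hs sy e; rewrite (bigD1 i) //=.
move: (\big[@splus G/SZero]_(j | P j && (j != i)) f j) => r <-.
case: (f i) r nz => [|a|a|a] [|b|b|b] //= _; smx.
Qed.

Lemma big_eq_top y : (forall i, P i -> f i = y \/ mlt (f i) y) ->
   (exists2 i, P i & f i = y) -> \big[@splus G/SZero]_(j | P j) f j = y.
Proof.
move=> h [i Pi fi]; rewrite (bigD1 i) //= fi.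
have: (\big[@splus G/SZero]_(j | P j && (j != i)) f j) = y \/
   mlt (\big[@splus G/SZero]_(j | P j && (j != i)) f j) y.
  apply: (big_rec (fun s => s = y \/ mlt s y)); first by right; left.
  move=> j x /andP[Pj _] [->|hx]; case: (h j Pj) => [->|hj].
  - by left; rewrite splusxx.
  - by left; rewrite splusC splus_mlt.
  - by left; rewrite splus_mlt.
  - by right; apply: mlt_plus.
by case=> [->|hl]; [rewrite splusxx | rewrite splus_mlt].
Qed.

End Bigs.

End Alg.

End Alg.
Import Alg.

Module A2.
Set Implicit Arguments. Unset Strict Implicit. Unset Printing Implicit Defensive.
Import Order.TTheory GRing.Theory.
Local Open Scope ring_scope.
Section S.
Variable G : porderZmodType.
Hypothesis HG : divOAG G.
Implicit Types a b c : smax G.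

#[local] Lemma splusA' : associative (@splus G). Proof. exact: splusA HG. Qed.
Lemma splusC' : commutative (@splus G). Proof. exact: splusC HG. Qed.
Lemma stDl : left_distributive (@stimes G) (@splus G). Proof. exact: stimesDl HG. Qed.
Lemma stDr : right_distributive (@stimes G) (@splus G). Proof. exact: stimesDr HG. Qed.
#[local] HB.instance Definition _ := Monoid.isComLaw.Build (smax G) SZero (@splus G) splusA' splusC' (@splus0l G).
#[local] HB.instance Definition _ := Monoid.isComLaw.Build (smax G) (sone G) (@stimes G) (@stimesA G) (@stimesC G) (@stimes1l G).
#[local] HB.instance Definition _ := Monoid.isMulLaw.Build (smax G) SZero (@stimes G) (@stimes0l G) (@stimes0r G).
#[local] HB.instance Definition _ := Monoid.isAddLaw.Build (smax G) (@stimes G) (@splus G) stDl stDr.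

Ltac cmp1 :=
  match goal with
  | |- context [?x == ?y] =>
      let H := fresh "H" in
      case: (comparable_ltgtP (totG HG x y)) => H; try subst
  end.

Ltac closelt :=
  match goal with
  | H : is_true (?a < ?a) |- _ => by rewrite ltxx in H
  | H1 : is_true (?a < ?b), H2 : is_true (?b < ?a) |- _ =>
      by move: (lt_trans H1 H2); rewrite ltxx
  | H1 : is_true (?a < ?b), H2 : is_true (?b <= ?a) |- _ =>
      by move: (lt_le_trans H1 H2); rewrite ltxx
  | H1 : is_true (?a < ?b), H2 : is_true (?b < ?c), H3 : is_true (?c < ?a) |- _ =>
      by move: (lt_trans (lt_trans H1 H2) H3); rewrite ltxx
  end.

Ltac smx := repeat (first [done | closelt | progress simpl | progress rewrite ?(eqD2r HG) ?(eqD2l HG) ?(ltD2r HG) ?(ltD2l HG) | cmp1 | progress (intros; subst) | congruence ]).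

Local Notation "a (+) b" := (splus a b) (at level 50, left associativity).
Local Notation "a (x) b" := (stimes a b) (at level 40, left associativity).
Local Notation "(-) a" := (sopp a) (at level 35).

Definition isbal (a : smax G) := match a with SZero | SBal _ => true | _ => false end.

Lemma balP a : sbalanced a <-> isbal a.
Proof. by rewrite /sbalanced; case: a => [|x|x|x] //=; split. Qed.

Lemma bal_plus a b : sbalanced a -> sbalanced b -> sbalanced (a (+) b).
Proof.
move=> /balP ha /balP hb; apply/balP; move: ha hb.
case: a b => [|x|x|x] [|y|y|y] //= _ _; smx.
Qed.

Lemma bal_big (I : finType) (P : pred I) (f : I -> smax G) :
  (forall i, P i -> sbalanced (f i)) -> sbalanced (\big[@splus G/SZero]_(i | P i) f i).
Proof.
move=> h; apply: (big_rec (fun s => sbalanced s)); first by [].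
by move=> i x Pi hx; apply: bal_plus => //; apply: h.
Qed.

Lemma bal_timesl a b : sbalanced a -> sbalanced (a (x) b).
Proof. by move=> /balP; case: a b => [|x|x|x] [|y|y|y]. Qed.
Lemma bal_timesr a b : sbalanced b -> sbalanced (a (x) b).
Proof. by rewrite stimesC; apply: bal_timesl. Qed.

Lemma bal_opp a : sbalanced ((-) a) <-> sbalanced a.
Proof. by split=> /balP h; apply/balP; move: h; case: a. Qed.

Lemma bal_sub a : sbalanced (a (+) (-) a).
Proof. by apply/balP; case: a => [|x|x|x] //=; rewrite eqxx. Qed.

Lemma signed_bal_eq a b : ssigned a -> ssigned b -> sbalanced (a (+) (-) b) -> a = b.
Proof.
move=> + + /balP; case: a b => [|x|x|x] [|y|y|y] //= _ _; smx.
Qed.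

Lemma signed_opp a : ssigned ((-) a) <-> ssigned a.
Proof. by case: a. Qed.

Lemma sopp_eq0 a : (-) a = SZero <-> a = SZero.
Proof. by case: a. Qed.

Lemma smodg_opp a : smodg ((-) a) = smodg a.
Proof. by case: a. Qed.

Lemma sopp0 : (-) (@SZero G) = SZero. Proof. by []. Qed.

Lemma sopp_big (I : finType) (P : pred I) (f : I -> smax G) :
  (-) (\big[@splus G/SZero]_(i | P i) f i) = \big[@splus G/SZero]_(i | P i) (-) (f i).
Proof. by apply: (big_morph (@sopp G)) => //; exact: (soppD HG). Qed.

Lemma snablaE a b : snabla a b <-> sbalanced (a (+) (-) b).
Proof. by []. Qed.

Lemma stimes_eq0 a b : a (x) b = SZero <-> a = SZero \/ b = SZero.
Proof.
split; last by case=> ->; rewrite ?stimes0r.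
by case: a b => [|x|x|x] [|y|y|y] //=; auto.
Qed.

Lemma stimes_neq0 a b : a <> SZero -> b <> SZero -> a (x) b <> SZero.
Proof. by move=> ha hb /stimes_eq0 []. Qed.

Lemma smodgM a b : a <> SZero -> b <> SZero -> smodg (a (x) b) = smodg a + smodg b.
Proof. by case: a b => [|x|x|x] [|y|y|y]. Qed.

Lemma signedM a b : ssigned a -> ssigned b -> ssigned (a (x) b).
Proof. by case: a b => [|x|x|x] [|y|y|y]. Qed.

Lemma signedM_inv a b : b <> SZero -> ssigned (a (x) b) -> ssigned a.
Proof. by case: a b => [|x|x|x] [|y|y|y]. Qed.

Lemma signedM_invr a b : a <> SZero -> ssigned (a (x) b) -> ssigned b.
Proof. by rewrite stimesC; apply: signedM_inv. Qed.

Section BigProd.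
Variable I : finType.
Variable P : pred I.
Variable F : I -> smax G.

Lemma prod_neq0 : (forall i, P i -> F i <> SZero) -> \big[@stimes G/sone G]_(i | P i) F i <> SZero.
Proof.
move=> h; apply: (big_rec (fun s => s <> SZero)) => //.
by move=> i x Pi hx; apply: stimes_neq0 => //; apply: h.
Qed.

Lemma prod_eq0 i : P i -> F i = SZero -> \big[@stimes G/sone G]_(i | P i) F i = SZero.
Proof. by move=> Pi Fi; rewrite (bigD1 i) //= Fi stimes0l. Qed.

Lemma prod_smodg : (forall i, P i -> F i <> SZero) ->
  smodg (\big[@stimes G/sone G]_(i | P i) F i) = \sum_(i | P i) smodg (F i).
Proof.
move=> h; move: (prod_neq0 h); apply: (big_rec2 (fun s t => s <> SZero -> smodg s = t)) => //.
move=> i x y Pi hxy hx.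
have nx : x <> SZero by move=> x0; apply: hx; rewrite x0 stimes0r.
by rewrite smodgM ?hxy //; apply: h.
Qed.

Lemma prod_signed : (forall i, P i -> ssigned (F i)) -> ssigned (\big[@stimes G/sone G]_(i | P i) F i).
Proof.
move=> h; apply: (big_rec (fun s => ssigned s)) => //.
by move=> i x Pi hx; apply: signedM => //; apply: h.
Qed.

End BigProd.

Lemma eq0_dec a : {a = SZero} + {a <> SZero}.
Proof. by case: a => [|x|x|x]; [left|right..]. Qed.

Lemma mle_mul c a b : mle a b -> mle (c (x) a) (c (x) b).
Proof.
case=> [->|[nb ab]]; first by left; rewrite stimes0r.
case: (eq0_dec c)=> [->|nc]; first by left.
case: (eq0_dec a)=> [->|na]; first by left; rewrite stimes0r.
right; split; first exact: stimes_neq0.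
by rewrite !smodgM // (leD2l HG).
Qed.

Lemma mlt_mul c a b : c <> SZero -> mlt a b -> mlt (c (x) a) (c (x) b).
Proof.
move=> nc; case=> [->|[nb ab]]; first by left; rewrite stimes0r.
case: (eq0_dec a)=> [->|na]; first by left; rewrite stimes0r.
right; split; first exact: stimes_neq0.
by rewrite !smodgM // (ltD2l HG).
Qed.

Lemma mle_opp a b : mle a b -> mle ((-) a) ((-) b).
Proof.
case=> [->|[nb ab]]; first by left.
by right; split; [move/sopp_eq0 | rewrite !smodg_opp].
Qed.

Lemma mle_oppl a b : mle ((-) a) b <-> mle a b.
Proof.
split; case=> [/sopp_eq0 ->|[nb ab]]; try by left.
  by right; rewrite smodg_opp in ab.
by right; rewrite smodg_opp.
Qed.

Lemma mlt_oppl a b : mlt ((-) a) b <-> mlt a b.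
Proof.
split; case=> [/sopp_eq0 ->|[nb ab]]; try by left.
  by right; rewrite smodg_opp in ab.
by right; rewrite smodg_opp.
Qed.

Lemma ssignn_odd m : ssignn G m = ssignn G (odd m).
Proof. by rewrite /ssignn; case: (odd m). Qed.

Lemma ssignnD (m1 m2 : nat) : ssignn G m1 (x) ssignn G m2 = ssignn G (m1 + m2)%N.
Proof.
rewrite /ssignn oddD; case: (odd m1); case: (odd m2) => //=; rewrite /sone /= ?addr0 //.
Qed.

Lemma ssignn_signed m : ssigned (ssignn G m).
Proof. by rewrite /ssignn; case: (odd m). Qed.

Lemma ssignn_neq0 m : ssignn G m <> SZero.
Proof. by rewrite /ssignn; case: (odd m). Qed.

Lemma ssignn_smodg m : smodg (ssignn G m) = 0.
Proof. by rewrite /ssignn; case: (odd m). Qed.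

Lemma ssignn_negb (b : bool) x : ssignn G (~~ b) (x) x = (-) (ssignn G b (x) x).
Proof.
by case: b; case: x.
Qed.

Definition sinv (a : smax G) : smax G :=
  match a with SZero => SZero | SPos x => SPos (- x) | SNeg x => SNeg (- x) | SBal x => SBal (- x) end.

Lemma sinvK a : ssigned a -> a <> SZero -> sinv a (x) a = sone G.
Proof. by case: a => [|x|x|x] //= _ _; rewrite addNr. Qed.

Lemma sinv_signed a : ssigned a -> ssigned (sinv a).
Proof. by case: a. Qed.

Lemma sinv_neq0 a : a <> SZero -> sinv a <> SZero.
Proof. by case: a. Qed.

Lemma smodg_sinv a : smodg (sinv a) = - smodg a.
Proof. by case: a => //=; rewrite oppr0. Qed.

Lemma bal_cancel c a : ssigned c -> c <> SZero -> sbalanced (c (x) a) -> sbalanced a.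
Proof.
move=> sc nc /(bal_timesr (sinv c)); by rewrite stimesA sinvK // stimes1l.
Qed.

End S.

End A2.
Import A2.

Module A3.
Set Implicit Arguments. Unset Strict Implicit. Unset Printing Implicit Defensive.
Import Order.TTheory GRing.Theory.
Local Open Scope ring_scope.
Section S.
Variable G : porderZmodType.
Hypothesis HG : divOAG G.
Implicit Types a b c : smax G.

#[local] Lemma splusA' : associative (@splus G). Proof. exact: splusA HG. Qed.
Lemma splusC' : commutative (@splus G). Proof. exact: splusC HG. Qed.
Lemma stDl : left_distributive (@stimes G) (@splus G). Proof. exact: stimesDl HG. Qed.
Lemma stDr : right_distributive (@stimes G) (@splus G). Proof. exact: stimesDr HG. Qed.
#[local] HB.instance Definition _ := Monoid.isComLaw.Build (smax G) SZero (@splus G) splusA' splusC' (@splus0l G).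
#[local] HB.instance Definition _ := Monoid.isComLaw.Build (smax G) (sone G) (@stimes G) (@stimesA G) (@stimesC G) (@stimes1l G).
#[local] HB.instance Definition _ := Monoid.isMulLaw.Build (smax G) SZero (@stimes G) (@stimes0l G) (@stimes0r G).
#[local] HB.instance Definition _ := Monoid.isAddLaw.Build (smax G) (@stimes G) (@splus G) stDl stDr.

Ltac cmp1 :=
  match goal with
  | |- context [?x == ?y] =>
      let H := fresh "H" in
      case: (comparable_ltgtP (totG HG x y)) => H; try subst
  end.

Ltac closelt :=
  match goal with
  | H : is_true (?a < ?a) |- _ => by rewrite ltxx in H
  | H1 : is_true (?a < ?b), H2 : is_true (?b < ?a) |- _ =>
      by move: (lt_trans H1 H2); rewrite ltxx
  | H1 : is_true (?a < ?b), H2 : is_true (?b <= ?a) |- _ =>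
      by move: (lt_le_trans H1 H2); rewrite ltxx
  | H1 : is_true (?a < ?b), H2 : is_true (?b < ?c), H3 : is_true (?c < ?a) |- _ =>
      by move: (lt_trans (lt_trans H1 H2) H3); rewrite ltxx
  end.

Ltac smx := repeat (first [done | closelt | progress simpl | progress rewrite ?(eqD2r HG) ?(eqD2l HG) ?(ltD2r HG) ?(ltD2l HG) | cmp1 | progress (intros; subst) | congruence ]).

Local Notation "a (+) b" := (splus a b) (at level 50, left associativity).
Local Notation "a (x) b" := (stimes a b) (at level 40, left associativity).
Local Notation "(-) a" := (sopp a) (at level 35).

Implicit Types x y z w : G.

Lemma leD x y z w : x <= y -> z <= w -> x + z <= y + w.
Proof.
move=> h1 h2; apply: (@le_trans _ _ (y + z)); first by rewrite (leD2r HG).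
by rewrite (leD2l HG).
Qed.

Lemma ltD_le x y z w : x < y -> z <= w -> x + z < y + w.
Proof.
move=> h1 h2; apply: (@lt_le_trans _ _ (y + z)); first by rewrite (ltD2r HG).
by rewrite (leD2l HG).
Qed.

Lemma le_ltD x y z w : x <= y -> z < w -> x + z < y + w.
Proof. by move=> h1 h2; rewrite (addrC x) (addrC y); apply: ltD_le. Qed.

Lemma ltNgeG x y : (x < y) = ~~ (y <= x).
Proof. by apply: comparable_ltNge; apply: totG. Qed.

Lemma leNgtG x y : (x <= y) = ~~ (y < x).
Proof. by rewrite ltNgeG negbK. Qed.

Lemma double_le x y : x *+ 2 <= y *+ 2 -> x <= y.
Proof.
move=> h; rewrite leNgtG; apply/negP => yx.
have h2 : y *+ 2 < x *+ 2 by rewrite !mulr2n; apply: ltD_le => //; apply: ltW.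
by move: (lt_le_trans h2 h); rewrite ltxx.
Qed.

Lemma double_lt x y : x *+ 2 < y *+ 2 -> x < y.
Proof.
move=> h; rewrite ltNgeG; apply/negP => yx.
have h2 : y *+ 2 <= x *+ 2 by rewrite !mulr2n; apply: leD.
by move: (le_lt_trans h2 h); rewrite ltxx.
Qed.

Lemma subr_le x y z : (x - z <= y) = (x <= y + z).
Proof. by rewrite -(leD2r HG (x - z) y z) subrK. Qed.

Lemma subr_lt x y z : (x - z < y) = (x < y + z).
Proof. by rewrite -(ltD2r HG (x - z) y z) subrK. Qed.

Lemma sum_le (I : finType) (P : pred I) (f g : I -> G) : (forall i, P i -> f i <= g i) -> \sum_(i | P i) f i <= \sum_(i | P i) g i.
Proof.
move=> h; elim/big_rec2: _ => //= i a b Pi hab.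
by apply: leD => //; apply: h.
Qed.

Lemma sum_lt (I : finType) (P : pred I) (f g : I -> G) : (forall i, P i -> f i <= g i) -> (exists2 i, P i & f i < g i) ->
  \sum_(i | P i) f i < \sum_(i | P i) g i.
Proof.
move=> h [i Pi lt]; rewrite (bigD1 i) //= [X in _ < X](bigD1 i) //=.
apply: ltD_le => //; apply: sum_le => j /andP[Pj _]; exact: h.
Qed.


End S.

End A3.
Import A3.

Module M1.
Set Implicit Arguments. Unset Strict Implicit. Unset Printing Implicit Defensive.
Import Order.TTheory GRing.Theory.
Local Open Scope ring_scope.
Section S.
Variable G : porderZmodType.
Hypothesis HG : divOAG G.
Implicit Types a b c : smax G.

#[local] Lemma splusA' : associative (@splus G). Proof. exact: splusA HG. Qed.
Lemma splusC' : commutative (@splus G). Proof. exact: splusC HG. Qed.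
Lemma stDl : left_distributive (@stimes G) (@splus G). Proof. exact: stimesDl HG. Qed.
Lemma stDr : right_distributive (@stimes G) (@splus G). Proof. exact: stimesDr HG. Qed.
#[local] HB.instance Definition _ := Monoid.isComLaw.Build (smax G) SZero (@splus G) splusA' splusC' (@splus0l G).
#[local] HB.instance Definition _ := Monoid.isComLaw.Build (smax G) (sone G) (@stimes G) (@stimesA G) (@stimesC G) (@stimes1l G).
#[local] HB.instance Definition _ := Monoid.isMulLaw.Build (smax G) SZero (@stimes G) (@stimes0l G) (@stimes0r G).
#[local] HB.instance Definition _ := Monoid.isAddLaw.Build (smax G) (@stimes G) (@splus G) stDl stDr.

Ltac cmp1 :=
  match goal with
  | |- context [?x == ?y] =>
      let H := fresh "H" in
      case: (comparable_ltgtP (totG HG x y)) => H; try subst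
  end.

Ltac closelt :=
  match goal with
  | H : is_true (?a < ?a) |- _ => by rewrite ltxx in H
  | H1 : is_true (?a < ?b), H2 : is_true (?b < ?a) |- _ =>
      by move: (lt_trans H1 H2); rewrite ltxx
  | H1 : is_true (?a < ?b), H2 : is_true (?b <= ?a) |- _ =>
      by move: (lt_le_trans H1 H2); rewrite ltxx
  | H1 : is_true (?a < ?b), H2 : is_true (?b < ?c), H3 : is_true (?c < ?a) |- _ =>
      by move: (lt_trans (lt_trans H1 H2) H3); rewrite ltxx
  end.

Ltac smx := repeat (first [done | closelt | progress simpl | progress rewrite ?(eqD2r HG) ?(eqD2l HG) ?(ltD2r HG) ?(ltD2l HG) | cmp1 | progress (intros; subst) | congruence ]).

Local Notation "a (+) b" := (splus a b) (at level 50, left associativity).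
Local Notation "a (x) b" := (stimes a b) (at level 40, left associativity).
Local Notation "(-) a" := (sopp a) (at level 35).

Variables (m : nat) (A : 'M[smax G]_m.+1) (k : 'I_m.+1).
Hypothesis tpdA : tpd A.
Hypothesis simpleA : forall i, A i i = A k k -> i = k.
Implicit Types (s p : 'S_m.+1) (i j l x y : 'I_m.+1).

Definition gam := A k k.
Definition B := sshift gam A.
Definition t i := sadj B i k.
Definition mu i := smodg (B i i).
Definition om i j := smodg (B i j).

Lemma Adiag i : exists d, A i i = SPos d.
Proof.
case: tpdA => _ _ h _; move: (h i); rewrite /slt.
by case: (A i i) => [|x|x|x] //= _; exists x.
Qed.

Lemma Bij i j : i != j -> B i j = (-) (A i j).
Proof. by move=> /negPf hij; rewrite /B /sshift mxE hij. Qed.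

Lemma Boff_signed i j : i != j -> ssigned (B i j).
Proof. by move=> hij; rewrite Bij //; apply/signed_opp; case: tpdA => _ h _ _; apply: h. Qed.

Lemma Bkk : exists g, B k k = SBal g /\ mu k = g.
Proof.
case: (Adiag k) => g hg; exists g; rewrite /mu /B /sshift mxE eqxx /gam hg /=.
by rewrite eqxx.
Qed.

Lemma Bkk_bal : sbalanced (B k k).
Proof. by case: Bkk => g [-> _]. Qed.

Lemma Bkk_neq0 : B k k <> SZero.
Proof. by case: Bkk => g [-> _]. Qed.

Lemma Bii_signed i : i != k -> ssigned (B i i) /\ B i i <> SZero.
Proof.
move=> ik; case: (Adiag i) => d hd; case: (Adiag k) => g hg.
have dg : d != g.
  apply/negP => /eqP dg; move/eqP: ik; apply; apply: simpleA; by rewrite hd hg dg.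
rewrite /B /sshift mxE eqxx /gam hg hd /= eq_sym (negPf dg).
by case: ifP.
Qed.

Lemma Bii_neq0 i : B i i <> SZero.
Proof.
case: (eqVneq i k) => [->|ik]; first exact: Bkk_neq0.
by case: (Bii_signed ik).
Qed.

Lemma Adiag_le_mu i d : A i i = SPos d -> d <= mu i.
Proof.
move=> hd; case: (Adiag k) => g hg.
rewrite /mu /B /sshift mxE eqxx /gam hg hd /=.
case: (comparable_ltgtP (totG HG g d)) => h //=; try exact: ltW; by rewrite ?h.
Qed.

Lemma Dom i j : i != j -> B i j <> SZero -> om i j *+ 2 < mu i + mu j.
Proof.
move=> ij nz; case: (Adiag i) => di hi; case: (Adiag j) => dj hj.
apply: (@lt_le_trans _ _ (di + dj)); last by apply: leD => //; apply: Adiag_le_mu.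
case: tpdA => _ hs _ h; move: (h i j ij) (hs i j); rewrite /om Bij // smodg_opp.
rewrite /slt hi hj; move: nz; rewrite Bij //; case: (A i j) => [|a|a|a] //= _ => + _;
 rewrite mulr2n; case: (comparable_ltgtP (totG HG (a + a) (di + dj))) => //.
Qed.

Definition Pp (s : 'S_m.+1) := \big[@stimes G/sone G]_(x | x != k) B x (s x).
Definition sg (s : 'S_m.+1) := ssignn G (odd_perm s).
Definition T (s : 'S_m.+1) := sg s (x) Pp s.

Lemma tE j : t j = \big[@splus G/SZero]_(s : 'S_m.+1 | s k == j) T s.
Proof.
rewrite [RHS](reindex (lift_perm k j)); last first.
  pose ulsf (i : 'I_m.+1) (s : 'S_m.+1) (x : 'I_m) := odflt x (unlift (s i) (s (lift i x))).
  have ulsfK (i : 'I_m.+1) (s : 'S_m.+1) (x : 'I_m): lift (s i) (ulsf i s x) = s (lift i x).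
    rewrite /ulsf; have:= neq_lift i x.
    by rewrite -(can_eq (permK s)) => /unlift_some[] ? ? ->.
  have inj_ulsf: injective (ulsf k _).
    move=> s; apply: can_inj (ulsf (s k) s^-1%g) _ => x'.
    by rewrite {1}/ulsf ulsfK !permK liftK.
  exists (fun s => perm (inj_ulsf s)) => [s _ | s].
    by apply/permP=> x'; rewrite permE /ulsf lift_perm_lift lift_perm_id liftK.
  move/(s _ =P _) => si0; apply/permP=> x.
  case: (unliftP k x) => [x'|] ->; rewrite ?lift_perm_id //.
  by rewrite lift_perm_lift -si0 permE ulsfK.
rewrite /t /sadj mxE /sdet big_distrr /=.
apply: eq_big => [s | s _]; first by rewrite lift_perm_id eqxx.
rewrite /T /sg stimesA ssignnD ssignn_odd [in RHS]ssignn_odd odd_lift_perm oddD.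
congr (_ (x) _); first by rewrite oddb oddD (addbC (odd j)) oddb.
case: (pickP 'I_m) => [k0 _ | n0]; last first.
  by rewrite /Pp !big1 // => [j' /unlift_some[i] | i _]; have:= n0 i.
rewrite /Pp (reindex (lift k)).
  apply: eq_big => [x | x _] /=; first by rewrite eq_sym neq_lift.
  by rewrite /row' /col' !mxE lift_perm_lift.
exists (fun x => odflt k0 (unlift k x)) => x; first by rewrite liftK.
by rewrite inE eq_sym => /unlift_some[x' ex ux]; rewrite ux /= ex.
Qed.

Lemma porbit_step (s : 'S_m.+1) x : (s x \in porbit s k) = (x \in porbit s k).
Proof.
rewrite porbit_sym [in RHS]porbit_sym.
by have := porbit_perm s 1 x; rewrite expg1 => ->.
Qed.

Definition Kf (b : bool) (s : 'S_m.+1) x := if (x \in porbit s k) == b then s x else x.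

Lemma Kinj (b : bool) (s : 'S_m.+1) : injective (Kf b s).
Proof.
move=> x y; rewrite /Kf.
case: ifP => hx; case: ifP => hy.
- exact: perm_inj.
- move=> e; move: hx; rewrite -porbit_step e hy; done.
- move=> e; move: hy; rewrite -porbit_step -e hx; done.
- done.
Qed.

Definition Kp (b : bool) (s : 'S_m.+1) := perm (@Kinj b s).

Lemma KpE (b : bool) (s : 'S_m.+1) x : Kp b s x = if (x \in porbit s k) == b then s x else x.
Proof. by rewrite permE. Qed.

Lemma sep (p : 'S_m.+1) j : j != k -> j \in porbit p k -> j \notin porbit (tperm k j * p) k.
Proof.
move=> jk hj.
have h1 := porbits_mul_tperm p k j.
have h2 := porbits_mul_tperm (tperm k j * p) k j.
rewrite /= mulgA tperm2 mul1g in h2.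
rewrite /= in h1.
rewrite porbit_sym in hj; rewrite hj eq_sym jk /= in h1.
rewrite eq_sym jk porbit_sym in h2.
apply/negP => hin; rewrite hin /= in h2.
move: h1 h2; set a := #|_|; set b := #|_|; move=> h1 h2; lia.
Qed.

Lemma Dsum (s : 'S_m.+1) (D : pred 'I_m.+1) :
  (forall x, D (s x) = D x) -> (forall x, D x -> B x (s x) <> SZero) ->
  \sum_(x | D x) om x (s x) <= \sum_(x | D x) mu x /\
  ((exists2 x, D x & s x != x) -> \sum_(x | D x) om x (s x) < \sum_(x | D x) mu x).
Proof.
move=> inv nz.
have re : \sum_(x | D x) mu (s x) = \sum_(x | D x) mu x.
  rewrite [RHS](reindex_inj (@perm_inj _ s)) /=.
  by apply: eq_bigl => x; rewrite inv.
have term x : D x -> om x (s x) *+ 2 <= mu x + mu (s x).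
  move=> Dx; case: (eqVneq (s x) x) => [->|sx]; first by rewrite /om mulr2n.
  by apply: ltW; apply: Dom; [by rewrite eq_sym | exact: nz].
have E1 : (\sum_(x | D x) om x (s x)) *+ 2 = \sum_(x | D x) om x (s x) *+ 2.
  by rewrite sumrMnl.
have E2 : (\sum_(x | D x) mu x) *+ 2 = \sum_(x | D x) (mu x + mu (s x)).
  by rewrite big_split /= re mulr2n.
split.
  apply: (double_le HG); rewrite E1 E2; apply: (sum_le HG) => x Dx; exact: term.
move=> [x Dx sx]; apply: (double_lt HG); rewrite E1 E2.
apply: (sum_lt HG) => [y Dy|]; first exact: term.
exists x => //; apply: Dom; [by rewrite eq_sym | exact: nz].
Qed.

Definition W (s : 'S_m.+1) := \sum_(x | x != k) om x (s x).

Lemma Pp_neq0 s : (forall x, x != k -> B x (s x) <> SZero) -> Pp s <> SZero.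
Proof. by move=> h; apply: prod_neq0. Qed.

Lemma Pp_eq0 s x : x != k -> B x (s x) = SZero -> Pp s = SZero.
Proof. by move=> xk hx; apply: (prod_eq0 (i := x)). Qed.

Lemma Pp_nz s : Pp s <> SZero -> forall x, x != k -> B x (s x) <> SZero.
Proof. by move=> h x xk hx; apply: h; apply: Pp_eq0 hx. Qed.

Lemma T_neq0 s : Pp s <> SZero -> T s <> SZero.
Proof. by move=> h; apply: stimes_neq0 => //; apply: ssignn_neq0. Qed.

Lemma T_eq0 s : Pp s = SZero -> T s = SZero.
Proof. by rewrite /T => ->; rewrite stimes0r. Qed.

Lemma smodg_T s : Pp s <> SZero -> smodg (T s) = W s.
Proof.
move=> h; rewrite /T smodgM //; last exact: ssignn_neq0.
by rewrite ssignn_smodg add0r prod_smodg //; apply: Pp_nz.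
Qed.

Lemma W_K s : Pp s <> SZero ->
  W s <= W (Kp true s) /\
  ((exists2 x, x \notin porbit s k & s x != x) -> W s < W (Kp true s)).
Proof.
move=> nz.
have kO : k \in porbit s k by apply: porbit_id.
have split_W (f : 'I_m.+1 -> G) : \sum_(x | x != k) f x =
   \sum_(x | (x != k) && (x \in porbit s k)) f x + \sum_(x | x \notin porbit s k) f x.
  rewrite (bigID (fun x => x \in porbit s k)) /=; congr (_ + _).
  by apply: eq_bigl => x; case: (eqVneq x k) => [->|]; rewrite ?kO.
have eW : W (Kp true s) = \sum_(x | (x != k) && (x \in porbit s k)) om x (s x) +
            \sum_(x | x \notin porbit s k) mu x.
  rewrite /W split_W; congr (_ + _); apply: eq_bigr => x hx.
    by move/andP: hx => [_ hx]; rewrite KpE hx.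
  by rewrite KpE (negPf hx).
have D1 x : (s x \notin porbit s k) = (x \notin porbit s k) by rewrite porbit_step.
have D2 x : x \notin porbit s k -> B x (s x) <> SZero.
  move=> xO; apply: (Pp_nz nz); apply: contraNneq xO => ->; exact: kO.
have [h1 h2] := @Dsum s (fun x => x \notin porbit s k) D1 D2.
rewrite eW /W split_W; split.
  by rewrite (leD2l HG).
by move=> ex; rewrite (ltD2l HG); apply: h2.
Qed.

Definition FW (s : 'S_m.+1) := \sum_x om x (s x).

Lemma FW_Kbar s : (forall x, x \in porbit s k -> B x (s x) <> SZero) ->
  FW s <= FW (Kp false s).
Proof.
move=> nz.
have eF (f : 'I_m.+1 -> G) : \sum_x f x =
   \sum_(x | x \in porbit s k) f x + \sum_(x | x \notin porbit s k) f x.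
  by rewrite (bigID (fun x => x \in porbit s k)).
rewrite /FW !eF; have -> : \sum_(x | x \notin porbit s k) om x (Kp false s x) =
   \sum_(x | x \notin porbit s k) om x (s x).
  by apply: eq_bigr => x hx; rewrite KpE (negPf hx).
have -> : \sum_(x | x \in porbit s k) om x (Kp false s x) = \sum_(x | x \in porbit s k) mu x.
  by apply: eq_bigr => x hx; rewrite KpE hx.
rewrite (leD2r HG).
have D1 x : (s x \in porbit s k) = (x \in porbit s k) by rewrite porbit_step.
by have [] := @Dsum s (fun x => x \in porbit s k) D1 nz.
Qed.

End S.

End M1.
Import M1.

Module M2.
Set Implicit Arguments. Unset Strict Implicit. Unset Printing Implicit Defensive.
Import Order.TTheory GRing.Theory.
Local Open Scope ring_scope.
Section S.
Variable G : porderZmodType.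
Hypothesis HG : divOAG G.
Implicit Types a b c : smax G.

#[local] Lemma splusA' : associative (@splus G). Proof. exact: splusA HG. Qed.
Lemma splusC' : commutative (@splus G). Proof. exact: splusC HG. Qed.
Lemma stDl : left_distributive (@stimes G) (@splus G). Proof. exact: stimesDl HG. Qed.
Lemma stDr : right_distributive (@stimes G) (@splus G). Proof. exact: stimesDr HG. Qed.
#[local] HB.instance Definition _ := Monoid.isComLaw.Build (smax G) SZero (@splus G) splusA' splusC' (@splus0l G).
#[local] HB.instance Definition _ := Monoid.isComLaw.Build (smax G) (sone G) (@stimes G) (@stimesA G) (@stimesC G) (@stimes1l G).
#[local] HB.instance Definition _ := Monoid.isMulLaw.Build (smax G) SZero (@stimes G) (@stimes0l G) (@stimes0r G).
#[local] HB.instance Definition _ := Monoid.isAddLaw.Build (smax G) (@stimes G) (@splus G) stDl stDr.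

Ltac cmp1 :=
  match goal with
  | |- context [?x == ?y] =>
      let H := fresh "H" in
      case: (comparable_ltgtP (totG HG x y)) => H; try subst
  end.

Ltac closelt :=
  match goal with
  | H : is_true (?a < ?a) |- _ => by rewrite ltxx in H
  | H1 : is_true (?a < ?b), H2 : is_true (?b < ?a) |- _ =>
      by move: (lt_trans H1 H2); rewrite ltxx
  | H1 : is_true (?a < ?b), H2 : is_true (?b <= ?a) |- _ =>
      by move: (lt_le_trans H1 H2); rewrite ltxx
  | H1 : is_true (?a < ?b), H2 : is_true (?b < ?c), H3 : is_true (?c < ?a) |- _ =>
      by move: (lt_trans (lt_trans H1 H2) H3); rewrite ltxx
  end.

Ltac smx := repeat (first [done | closelt | progress simpl | progress rewrite ?(eqD2r HG) ?(eqD2l HG) ?(ltD2r HG) ?(ltD2l HG) | cmp1 | progress (intros; subst) | congruence ]).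

Local Notation "a (+) b" := (splus a b) (at level 50, left associativity).
Local Notation "a (x) b" := (stimes a b) (at level 40, left associativity).
Local Notation "(-) a" := (sopp a) (at level 35).

Variables (m : nat) (A : 'M[smax G]_m.+1) (k : 'I_m.+1).
Hypothesis tpdA : tpd A.
Hypothesis simpleA : forall i, A i i = A k k -> i = k.
Implicit Types (s p : 'S_m.+1) (i j l x y : 'I_m.+1).

Local Notation B := (B A k).
Local Notation t := (t A k).
Local Notation mu := (mu A k).
Local Notation om := (om A k).
Local Notation W := (W A k).
Local Notation Pp := (Pp A k).
Local Notation T := (T A k).
Local Notation Kp := (Kp k).

Let tau j := tperm k j.

Lemma Bx_nz x (b : bool) s : B x (s x) <> SZero -> B x (Kp b s x) <> SZero.
Proof. by rewrite KpE; case: ifP => // _ _; apply: (Bii_neq0 tpdA simpleA). Qed.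

Definition Rest j s := \sum_(x | (x != k) && (x != j)) om x (s x).

Lemma W_split j s : j != k -> W s = om j (s j) + Rest j s.
Proof. by move=> jk; rewrite /W /Rest (bigD1 j). Qed.

Lemma Rest_eq j s p : (forall x, x != k -> x != j -> s x = p x) -> Rest j s = Rest j p.
Proof. by move=> h; apply: eq_bigr => x /andP[xk xj]; rewrite h. Qed.

Lemma Pp_K (b : bool) s : Pp s <> SZero -> Pp (Kp b s) <> SZero.
Proof.
move=> h; apply: Pp_neq0 => x xk; apply: Bx_nz; exact: (Pp_nz h).
Qed.

Lemma Lstrict j l s : j != k -> l != j -> s k = l -> s j != j ->
  B j l <> SZero -> Pp s <> SZero ->
  exists p, [/\ p k = j, Pp p <> SZero & om j l + W s < mu j + W p].
Proof.
move=> jk lj skl sjj nzl nzs.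
have kj : k != j by rewrite eq_sym.
case: (boolP (j \in porbit s k)) => hj; last first.
  pose p := (tau j * Kp true s)%g.
  have kO : k \in porbit s k by apply: porbit_id.
  have pk : p k = j by rewrite /p permM /tau tpermL KpE (negPf hj).
  have pj : p j = l by rewrite /p permM /tau tpermR KpE kO skl.
  have pr x : x != k -> x != j -> p x = Kp true s x.
    by move=> xk xj; rewrite /p permM /tau tpermD // eq_sym.
  exists p; split => //.
    apply: Pp_neq0 => x xk; case: (eqVneq x j) => [->|xj]; first by rewrite pj.
    by rewrite pr //; apply: Bx_nz; apply: (Pp_nz nzs).
  have [_ h2] := W_K HG tpdA nzs.
  have lt : W s < W (Kp true s) by apply: h2; exists j.
  rewrite (W_split p jk) pj (W_split (Kp true s) jk) in lt *.
  rewrite KpE (negPf hj) /= in lt.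
  rewrite (Rest_eq (p := Kp true s) pr) addrCA.
  by rewrite (ltD2l HG).
pose r := (tau j * s)%g.
have hr : j \notin porbit r k by apply: sep.
pose p := (tau j * Kp true r)%g.
have kO : k \in porbit r k by apply: porbit_id.
have rk : r k = s j by rewrite /r permM /tau tpermL.
have rj : r j = l by rewrite /r permM /tau tpermR.
have rr x : x != k -> x != j -> r x = s x.
  by move=> xk xj; rewrite /r permM /tau tpermD // eq_sym.
have pk : p k = j by rewrite /p permM /tau tpermL KpE (negPf hr).
have pj : p j = s j by rewrite /p permM /tau tpermR KpE kO rk.
have pr x : x != k -> x != j -> p x = Kp true r x.
  by move=> xk xj; rewrite /p permM /tau tpermD // eq_sym.
have nzr : Pp r <> SZero.
  apply: Pp_neq0 => x xk; case: (eqVneq x j) => [->|xj]; first by rewrite rj.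
  by rewrite rr //; apply: (Pp_nz nzs).
exists p; split => //.
  apply: Pp_neq0 => x xk; case: (eqVneq x j) => [->|xj].
    by rewrite pj; apply: (Pp_nz nzs).
  by rewrite pr //; apply: Bx_nz; apply: (Pp_nz nzr).
have [_ h2] := W_K HG tpdA nzr.
have lt : W r < W (Kp true r) by apply: h2; exists j => //; rewrite rj.
rewrite (W_split r jk) rj (W_split (Kp true r) jk) in lt.
rewrite KpE (negPf hr) /= in lt.
rewrite (W_split s jk) (W_split p jk) pj (Rest_eq (p := Kp true r) pr).
rewrite (Rest_eq (s := s) (p := r)); last by move=> x xk xj; rewrite rr.
by rewrite [X in X < _]addrCA [X in _ < X]addrCA (ltD2l HG).
Qed.

Lemma sg1 : sg G (1%g : 'S_m.+1) = sone G.
Proof. by rewrite /sg odd_perm1. Qed.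

Lemma T1 : T 1%g = Pp 1%g.
Proof. by rewrite /M1.T sg1 stimes1l. Qed.

Lemma Pp1_signed : ssigned (Pp 1%g) /\ Pp 1%g <> SZero.
Proof.
split.
  apply: prod_signed => x xk; rewrite perm1; exact: (proj1 (Bii_signed tpdA simpleA xk)).
by apply: Pp_neq0 => x xk; rewrite perm1; apply: (Bii_neq0 tpdA simpleA).
Qed.

Lemma W1 : W 1%g = \sum_(x | x != k) mu x.
Proof. by apply: eq_bigr => x _; rewrite perm1. Qed.

Lemma tk : t k = Pp 1%g.
Proof.
rewrite (tE HG) -T1; apply: (big_eq_top HG); last by exists 1%g; rewrite ?perm1.
move=> s /eqP skk; case: (eqVneq s 1%g) => [->|s1]; first by left.
right; case: (eq0_dec (Pp s)) => [h|nz]; first by left; apply: T_eq0.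
have [s1n nz1] := Pp1_signed.
right; split; first by rewrite T1.
rewrite T1 smodg_T // -T1 smodg_T // W1.
have inv x : (s x != k) = (x != k).
  by rewrite -{1}skk (inj_eq (@perm_inj _ s)).
have [_ h] := Dsum HG tpdA (D := fun x => x != k) inv (Pp_nz nz).
apply: h; have [x sx] : exists x, s x != x.
  apply/existsP; move: s1; apply: contraNT => /existsPn hx.
  by apply/eqP/permP => x; rewrite perm1; apply/eqP; move: (hx x); rewrite negbK.
exists x => //; apply: contraNneq sx => ->; by rewrite skk.
Qed.

Lemma tk_signed : ssigned (t k) /\ t k <> SZero.
Proof. by rewrite tk; apply: Pp1_signed. Qed.

Lemma FW_split s : FW A k s = om k (s k) + W s.
Proof. by rewrite /FW (bigD1 k). Qed.

Lemma L1k l : l != k -> mle (B k l (x) t l) (B k k (x) t k).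
Proof.
move=> lk; rewrite (tE HG) big_distrr /=; apply: (mle_bigl HG) => s /eqP skl.
case: (eq0_dec (B k l)) => [->|nzl]; first by left.
case: (eq0_dec (Pp s)) => [h|nzs]; first by left; rewrite T_eq0 // stimes0r.
pose p := Kp false s.
have kO : k \in porbit s k by apply: porbit_id.
have pk : p k = k by rewrite /p KpE kO.
apply: (mle_trans (b := B k k (x) T p)); last first.
  by apply: (mle_mul HG); rewrite (tE HG A k k); apply: (mle_big HG); rewrite pk.
have nzp : Pp p <> SZero.
  apply: Pp_neq0 => x xk; rewrite /p KpE; case: ifP => _.
    exact: (Pp_nz nzs xk).
  exact: (Bii_neq0 tpdA simpleA).
right; split.
  apply: stimes_neq0; [exact: Bkk_neq0 tpdA | exact: T_neq0].
rewrite (@smodgM _ (B k l) (T s) nzl (T_neq0 nzs)).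
rewrite (@smodgM _ (B k k) (T p) (Bkk_neq0 tpdA) (T_neq0 nzp)) !smodg_T //.
have h : FW A k s <= FW A k p.
  apply: (FW_Kbar HG tpdA) => x xO; case: (eqVneq x k) => [->|xk]; first by rewrite skl.
  exact: (Pp_nz nzs).
by rewrite !FW_split pk skl in h.
Qed.

Definition Pq j s := \big[@stimes G/sone G]_(x | (x != k) && (x != j)) B x (s x).
Definition U j l := \big[@splus G/SZero]_(s : 'S_m.+1 | (s k == l) && (s j == j)) (sg G s (x) Pq j s).
Definition V j l := \big[@splus G/SZero]_(s : 'S_m.+1 | (s k == l) && (s j != j)) T s.

Lemma Pp_split j s : j != k -> Pp s = B j (s j) (x) Pq j s.
Proof. by move=> jk; rewrite /M1.Pp (bigD1 j). Qed.

Lemma t_dec1 j : j != k -> t j = \big[@splus G/SZero]_(l | l != j) (-) (B j l (x) U j l).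
Proof.
move=> jk; have kj : k != j by rewrite eq_sym.
rewrite (tE HG) (partition_big (fun s : 'S_m.+1 => s j) (fun l => l != j)) /=; last first.
  move=> s /eqP skj; apply/negP => /eqP sjj.
  by move/eqP: kj; apply; apply: (@perm_inj _ s); rewrite skj sjj.
apply: eq_bigr => l lj.
rewrite (reindex_inj (mulgI (tau j))) /= /U big_distrr /= (sopp_big HG).
apply: eq_big => [s | s /andP[skl sjj]].
  by rewrite !permM /tau tpermL tpermR andbC.
rewrite /M1.T /sg !permM /tau tpermL tpermR in skl sjj *.
rewrite odd_mul_tperm kj /= ssignn_negb; congr sopp.
rewrite (Pp_split _ jk) permM /tau tpermR (eqP sjj).
rewrite /Pq; set P1 := \big[_/_]_(x | _) _; set P2 := \big[_/_]_(x | _) _.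
have -> : P1 = P2.
  by apply: eq_bigr => x /andP[xk xj]; rewrite permM /tau tpermD // eq_sym.
by rewrite !stimesA (stimesC (ssignn _ _)).
Qed.

Lemma t_dec2 j l : j != k ->
  t l = (B j j (x) U j l) (+) V j l.
Proof.
move=> jk; rewrite (tE HG) (bigID (fun s : 'S_m.+1 => s j == j)) /=.
congr (_ (+) _); rewrite /U big_distrr /=.
apply: eq_bigr => s /andP[_ /eqP sjj].
by rewrite /M1.T (Pp_split _ jk) sjj !stimesA (stimesC (sg G s)).
Qed.

Lemma V_small j l : j != k -> l != j ->
  mlt (B j l (x) V j l) (B j j (x) t j).
Proof.
move=> jk lj; rewrite /V big_distrr /=; apply: (mlt_big HG) => s /andP[/eqP skl sjj].
case: (eq0_dec (B j l)) => [->|nzl]; first by left.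
case: (eq0_dec (Pp s)) => [h|nzs]; first by left; rewrite T_eq0 // stimes0r.
have [p [pk nzp lt]] := Lstrict jk lj skl sjj nzl nzs.
apply: (mlt_le_trans (b := B j j (x) T p)).
  right; split.
    apply: stimes_neq0; [exact: (Bii_neq0 tpdA simpleA) | exact: T_neq0].
  rewrite (@smodgM _ (B j l) (T s) nzl (T_neq0 nzs)).
  rewrite (@smodgM _ (B j j) (T p) (Bii_neq0 tpdA simpleA (i:=j)) (T_neq0 nzp)) !smodg_T //.
by apply: (mle_mul HG); rewrite (tE HG A k j); apply: (mle_big HG); rewrite pk.
Qed.

Lemma L2 j : j != k ->
  \big[@splus G/SZero]_(l | l != j) (-) (B j l (x) t l) = B j j (x) t j.
Proof.
move=> jk.
have e : \big[@splus G/SZero]_(l | l != j) (-) (B j l (x) t l) =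
   \big[@splus G/SZero]_(l | l != j) (-) (B j j (x) (B j l (x) U j l)) (+)
   \big[@splus G/SZero]_(l | l != j) (-) (B j l (x) V j l).
  rewrite -big_split /=; apply: eq_bigr => l lj.
  rewrite (t_dec2 l jk) stDr (soppD HG); congr (_ (+) _).
  by rewrite !stimesA (stimesC (B j l)).
rewrite e; have -> : \big[@splus G/SZero]_(l | l != j) (-) (B j j (x) (B j l (x) U j l)) =
   B j j (x) t j.
  rewrite (t_dec1 jk) big_distrr /=; apply: eq_bigr => l _.
  by rewrite soppMr.
apply: (splus_mlt HG); apply: (mlt_big HG) => l lj.
by apply/mlt_oppl; apply: V_small.
Qed.

End S.

End M2.
Import M2.

Module H.
Set Implicit Arguments. Unset Strict Implicit. Unset Printing Implicit Defensive.
Import Order.TTheory GRing.Theory.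
Local Open Scope ring_scope.
Section S.
Variable G : porderZmodType.
Hypothesis HG : divOAG G.
Implicit Types a b c : smax G.

#[local] Lemma splusA' : associative (@splus G). Proof. exact: splusA HG. Qed.
Lemma splusC' : commutative (@splus G). Proof. exact: splusC HG. Qed.
Lemma stDl : left_distributive (@stimes G) (@splus G). Proof. exact: stimesDl HG. Qed.
Lemma stDr : right_distributive (@stimes G) (@splus G). Proof. exact: stimesDr HG. Qed.
#[local] HB.instance Definition _ := Monoid.isComLaw.Build (smax G) SZero (@splus G) splusA' splusC' (@splus0l G).
#[local] HB.instance Definition _ := Monoid.isComLaw.Build (smax G) (sone G) (@stimes G) (@stimesA G) (@stimesC G) (@stimes1l G).
#[local] HB.instance Definition _ := Monoid.isMulLaw.Build (smax G) SZero (@stimes G) (@stimes0l G) (@stimes0r G).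
#[local] HB.instance Definition _ := Monoid.isAddLaw.Build (smax G) (@stimes G) (@splus G) stDl stDr.

Ltac cmp1 :=
  match goal with
  | |- context [?x == ?y] =>
      let H := fresh "H" in
      case: (comparable_ltgtP (totG HG x y)) => H; try subst
  end.

Ltac closelt :=
  match goal with
  | H : is_true (?a < ?a) |- _ => by rewrite ltxx in H
  | H1 : is_true (?a < ?b), H2 : is_true (?b < ?a) |- _ =>
      by move: (lt_trans H1 H2); rewrite ltxx
  | H1 : is_true (?a < ?b), H2 : is_true (?b <= ?a) |- _ =>
      by move: (lt_le_trans H1 H2); rewrite ltxx
  | H1 : is_true (?a < ?b), H2 : is_true (?b < ?c), H3 : is_true (?c < ?a) |- _ =>
      by move: (lt_trans (lt_trans H1 H2) H3); rewrite ltxx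
  end.

Ltac smx := repeat (first [done | closelt | progress simpl | progress rewrite ?(eqD2r HG) ?(eqD2l HG) ?(ltD2r HG) ?(ltD2l HG) | cmp1 | progress (intros; subst) | congruence ]).

Local Notation "a (+) b" := (splus a b) (at level 50, left associativity).
Local Notation "a (x) b" := (stimes a b) (at level 40, left associativity).
Local Notation "(-) a" := (sopp a) (at level 35).

Lemma exists_max (I : finType) (P : pred I) (h : I -> G) :
  (exists j, P j) -> exists j, P j /\ forall l, P l -> h l <= h j.
Proof.
move=> [j0 Pj0].
suff: forall n (Q : pred I), (#|Q| <= n)%N -> forall j0, Q j0 ->
   exists j, Q j /\ forall l, Q l -> h l <= h j by move/(_ _ P (leqnn _) j0 Pj0).
elim=> [|n IH] Q hQ j1 Qj1.
  have : (0 < #|Q|)%N by apply/card_gt0P; exists j1.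
  by move: hQ; case: #|Q|.
case: (boolP [forall l, Q l ==> (h l <= h j1)]) => [/forallP hall | /forallPn [l /negP hl]].
  by exists j1; split => // l Ql; move/implyP: (hall l); apply.
have Ql : Q l by case: (boolP (Q l)) => // nQ; case: hl; rewrite (negbTE nQ).
have lt1 : h j1 < h l.
  by rewrite (ltNgeG HG); apply/negP => le; apply: hl; apply/implyP.
pose Q' := [pred x | Q x && (h j1 < h x)].
have prop : Q' \proper Q.
  apply/properP; split; first by apply/subsetP => x /andP[].
  by exists j1 => //; rewrite inE ltxx andbF.
have hQ' : (#|Q'| <= n)%N by rewrite -ltnS; apply: leq_trans (proper_card prop) hQ.
have [j [/andP[Qj ltj] hj]] := IH Q' hQ' l (introT andP (conj Ql lt1)).
exists j; split => // x Qx; case: (boolP (h j1 < h x)) => hx.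
  by apply: hj; rewrite inE Qx hx.
apply: (@le_trans _ _ (h j1)); last exact: ltW.
by rewrite (leNgtG HG).
Qed.

Lemma climb (I : finType) (P : I -> Prop) (h : I -> G) :
  (forall j, P j -> exists l, P l /\ h j < h l) -> forall j, ~ P j.
Proof.
move=> hyp j Pj.
pose pb := fun x => if excluded_middle_informative (P x) then true else false.
have pbE x : pb x <-> P x by rewrite /pb; case: excluded_middle_informative.
have [jm [Pjm hm]] := @exists_max I pb h (ex_intro _ j (proj2 (pbE j) Pj)).
have [l [Pl lt]] := hyp jm (proj1 (pbE jm) Pjm).
by move: (lt_le_trans lt (hm l (proj2 (pbE l) Pl))); rewrite ltxx.
Qed.

Lemma pot (mj ml o a b : G) : o *+ 2 < mj + ml -> mj + a <= o + b ->
  mj + a *+ 2 < ml + b *+ 2.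
Proof.
move=> h1 h2.
have h3 : (mj + a) *+ 2 <= (o + b) *+ 2 by rewrite !mulr2n; apply: leD.
have h4 : (o + b) *+ 2 < mj + ml + b *+ 2 by rewrite mulrnDl (ltD2r HG).
have := le_lt_trans h3 h4.
by rewrite mulrnDl [mj *+ 2]mulr2n -addrA -addrA (ltD2l HG).
Qed.

Lemma bal_dom a r : ssigned a -> a <> SZero -> sbalanced (splus a r) ->
  r <> SZero /\ smodg a <= smodg r.
Proof.
move=> + + /balP; case: a r => [|x|x|x] [|y|y|y] //= _ _; smx;
  split=> //; try exact: ltW; by rewrite lexx.
Qed.

Lemma sabsM a b : sabs (stimes a b) = stimes (sabs a) (sabs b).
Proof. by case: a b => [|x|x|x] [|y|y|y]. Qed.

Lemma sabs_eq0 a : sabs a = SZero <-> a = SZero.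
Proof. by case: a. Qed.

Lemma sabs_opp a : sabs ((-) a) = sabs a.
Proof. by case: a. Qed.

Lemma smodg_sabs a a' : sabs a = sabs a' -> smodg a = smodg a'.
Proof. by case: a a' => [|x|x|x] [|y|y|y] //= [->]. Qed.

Lemma mle_sabs a a' b b' : sabs a = sabs a' -> sabs b = sabs b' -> mle a b -> mle a' b'.
Proof.
move=> ea eb; case=> [a0|[nb ab]].
  by left; apply/sabs_eq0; rewrite -ea a0.
right; split.
  by move=> b0; apply: nb; apply/sabs_eq0; rewrite eb b0.
by rewrite -(smodg_sabs ea) -(smodg_sabs eb).
Qed.

Lemma mlt_sabs a a' b b' : sabs a = sabs a' -> sabs b = sabs b' -> mlt a b -> mlt a' b'.
Proof.
move=> ea eb; case=> [a0|[nb ab]].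
  by left; apply/sabs_eq0; rewrite -ea a0.
right; split.
  by move=> b0; apply: nb; apply/sabs_eq0; rewrite eb b0.
by rewrite -(smodg_sabs ea) -(smodg_sabs eb).
Qed.

Lemma sabs_smodg a a' : a <> SZero -> a' <> SZero -> smodg a = smodg a' -> sabs a = sabs a'.
Proof. by case: a a' => [|x|x|x] [|y|y|y] //= _ _ ->. Qed.

Lemma mle_nlt a b : a <> SZero -> mle a b -> ~ mlt a b -> b <> SZero /\ smodg a = smodg b.
Proof.
move=> na [//|[nb ab]] nlt; split=> //; apply/eqP; rewrite eq_le ab /=.
by rewrite (leNgtG HG); apply/negP => lt; apply: nlt; right.
Qed.

End S.

End H.
Import H.

Module P3.
Set Implicit Arguments. Unset Strict Implicit. Unset Printing Implicit Defensive.
Import Order.TTheory GRing.Theory.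
Local Open Scope ring_scope.
Section S.
Variable G : porderZmodType.
Hypothesis HG : divOAG G.
Implicit Types a b c : smax G.

#[local] Lemma splusA' : associative (@splus G). Proof. exact: splusA HG. Qed.
Lemma splusC' : commutative (@splus G). Proof. exact: splusC HG. Qed.
Lemma stDl : left_distributive (@stimes G) (@splus G). Proof. exact: stimesDl HG. Qed.
Lemma stDr : right_distributive (@stimes G) (@splus G). Proof. exact: stimesDr HG. Qed.
#[local] HB.instance Definition _ := Monoid.isComLaw.Build (smax G) SZero (@splus G) splusA' splusC' (@splus0l G).
#[local] HB.instance Definition _ := Monoid.isComLaw.Build (smax G) (sone G) (@stimes G) (@stimesA G) (@stimesC G) (@stimes1l G).
#[local] HB.instance Definition _ := Monoid.isMulLaw.Build (smax G) SZero (@stimes G) (@stimes0l G) (@stimes0r G).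
#[local] HB.instance Definition _ := Monoid.isAddLaw.Build (smax G) (@stimes G) (@splus G) stDl stDr.

Ltac cmp1 :=
  match goal with
  | |- context [?x == ?y] =>
      let H := fresh "H" in
      case: (comparable_ltgtP (totG HG x y)) => H; try subst
  end.

Ltac closelt :=
  match goal with
  | H : is_true (?a < ?a) |- _ => by rewrite ltxx in H
  | H1 : is_true (?a < ?b), H2 : is_true (?b < ?a) |- _ =>
      by move: (lt_trans H1 H2); rewrite ltxx
  | H1 : is_true (?a < ?b), H2 : is_true (?b <= ?a) |- _ =>
      by move: (lt_le_trans H1 H2); rewrite ltxx
  | H1 : is_true (?a < ?b), H2 : is_true (?b < ?c), H3 : is_true (?c < ?a) |- _ =>
      by move: (lt_trans (lt_trans H1 H2) H3); rewrite ltxx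
  end.

Ltac smx := repeat (first [done | closelt | progress simpl | progress rewrite ?(eqD2r HG) ?(eqD2l HG) ?(ltD2r HG) ?(ltD2l HG) | cmp1 | progress (intros; subst) | congruence ]).

Local Notation "a (+) b" := (splus a b) (at level 50, left associativity).
Local Notation "a (x) b" := (stimes a b) (at level 40, left associativity).
Local Notation "(-) a" := (sopp a) (at level 35).

Variables (m : nat) (A : 'M[smax G]_m.+1) (k : 'I_m.+1).
Hypothesis tpdA : tpd A.
Hypothesis simpleA : forall i, A i i = A k k -> i = k.
Implicit Types (s p : 'S_m.+1) (i j l x y : 'I_m.+1).

Local Notation B := (B A k).
Local Notation t := (t A k).
Local Notation mu := (mu A k).
Local Notation om := (om A k).
Local Notation W := (W A k).
Local Notation Pp := (Pp A k).
Local Notation T := (T A k).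
Local Notation Kp := (Kp k).
Local Notation gam := (gam A k).

Lemma smulvB v i : smulv B v i = (gam (x) v i) (+) (-) (smulv A v i).
Proof.
rewrite /smulv.
have -> : \big[@splus G/SZero]_j (B i j (x) v j) =
   \big[@splus G/SZero]_j (((if i == j then gam else SZero) (x) v j) (+) (-) (A i j (x) v j)).
  by apply: eq_bigr => j _; rewrite /M1.B /sshift mxE stDl soppMl.
rewrite big_split /= (sopp_big HG); congr (_ (+) _).
rewrite (bigD1 i) //= eqxx big1 ?splus0r // => j ji.
by rewrite eq_sym (negPf ji).
Qed.

Lemma eig_iff v i : snabla (smulv A v i) (gam (x) v i) <-> sbalanced (smulv B v i).
Proof.
rewrite smulvB snablaE -bal_opp (soppD HG) soppK splusC'.
by [].
Qed.

Lemma row_split (w : 'I_m.+1 -> smax G) j :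
  smulv B w j = (B j j (x) w j) (+) \big[@splus G/SZero]_(l | l != j) (B j l (x) w l).
Proof. by rewrite /smulv (bigD1 j). Qed.

Lemma Bjj_signed j : j != k -> ssigned (B j j) /\ B j j <> SZero.
Proof. exact: (Bii_signed tpdA simpleA). Qed.

Lemma nzB j : B j j <> SZero.
Proof. exact: (Bii_neq0 tpdA simpleA). Qed.

Lemma L1 j l : j != k -> l != j -> mle (B j l (x) t l) (B j j (x) t j).
Proof.
move=> jk lj; rewrite -(L2 HG tpdA simpleA jk); apply/mle_oppl.
exact: (@mle_big _ HG _ (fun l => l != j) (fun l => (-) (B j l (x) t l)) l lj).
Qed.

Lemma part1 i : sbalanced (smulv B t i).
Proof.
rewrite row_split; case: (eqVneq i k) => [->|ik].
  apply: (splus_mle_bal HG); first exact: bal_timesl (Bkk_bal k tpdA).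
  by apply: (mle_bigl HG) => l lk; apply: (L1k HG tpdA simpleA).
have -> : \big[@splus G/SZero]_(l | l != i) (B i l (x) t l) = (-) (B i i (x) t i).
  by rewrite -(L2 HG tpdA simpleA ik) (sopp_big HG); apply: eq_bigr => l _; rewrite soppK.
exact: bal_sub.
Qed.

Section Part3.
Variable v : 'I_m.+1 -> smax G.
Hypothesis vs : forall i, ssigned (v i).
Hypothesis vnz : exists i, v i <> SZero.
Hypothesis vb : forall i, sbalanced (smulv B v i).

Lemma row_succ j : j != k -> v j <> SZero ->
  exists l, [/\ l != j, B j l <> SZero, v l <> SZero & mu j + smodg (v j) <= om j l + smodg (v l)].
Proof.
move=> jk nj; have := vb j; rewrite row_split => hb.
have [sj nzj] := Bjj_signed jk.
have [nR le] := bal_dom HG (signedM sj (vs j)) (stimes_neq0 nzj nj) hb.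
case: (big_attained HG (fun l => l != j) (fun l => B j l (x) v l)) => [//|[l [lj nt e]]].
have [nzl nvl] : B j l <> SZero /\ v l <> SZero.
  by split=> h; apply: nt; rewrite h ?stimes0r ?stimes0l.
exists l; split => //.
by rewrite /mu /om -!smodgM // e.
Qed.

Lemma vk_nz : v k <> SZero.
Proof.
move=> vk0; case: vnz => i; apply: (@climb _ HG _ (fun j => v j <> SZero) (fun j => mu j + smodg (v j) *+ 2)).
move=> j nj; have jk : j != k by apply/eqP => ejk; apply: nj; rewrite ejk.
have [l [lj nl nvl le]] := row_succ jk nj.
exists l; split => //; apply: (pot HG) le.
by apply: (Dom HG tpdA) => //; rewrite eq_sym.
Qed.

Definition lam := v k (x) sinv (t k).
Definition tau i := lam (x) t i.

Lemma tk_s : ssigned (t k) /\ t k <> SZero.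
Proof. exact: (tk_signed HG tpdA simpleA). Qed.

Lemma lam_prop : ssigned lam /\ lam <> SZero.
Proof.
have [s1 n1] := tk_s; split.
  by apply: signedM; [apply: vs | apply: sinv_signed].
by apply: stimes_neq0; [apply: vk_nz | apply: sinv_neq0].
Qed.

Lemma tau_k : tau k = v k.
Proof.
have [s1 n1] := tk_s.
by rewrite /tau /lam -stimesA sinvK // stimes1r.
Qed.

Lemma L2tau j : j != k ->
  \big[@splus G/SZero]_(l | l != j) (-) (B j l (x) tau l) = B j j (x) tau j.
Proof.
move=> jk; rewrite /tau [in RHS]stimesA [in RHS](stimesC (B j j)) -[in RHS]stimesA.
rewrite -(L2 HG tpdA simpleA jk) big_distrr /=; apply: eq_bigr => l _.
rewrite soppMr /lam; congr sopp.
by rewrite !stimesA (stimesC (B j l) (v k)) -(stimesA (v k) (B j l)) (stimesC (B j l)) !stimesA.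
Qed.

Lemma L1tau j l : j != k -> l != j -> mle (B j l (x) tau l) (B j j (x) tau j).
Proof.
move=> jk lj; rewrite -(L2tau jk); apply/mle_oppl.
exact: (@mle_big _ HG _ (fun l => l != j) (fun l => (-) (B j l (x) tau l)) l lj).
Qed.

Lemma claimA1 j : tau j = SZero -> v j = SZero.
Proof.
move=> tj; case: (eq0_dec (v j)) => // nj; exfalso.
apply: (@climb _ HG _ (fun j => v j <> SZero /\ tau j = SZero)
          (fun j => mu j + smodg (v j) *+ 2) _ j (conj nj tj)).
move=> {tj nj}j [nj tj].
have jk : j != k by apply/eqP => ejk; apply: nj; rewrite -tj ejk tau_k.
have [l [lj nl nvl le]] := row_succ jk nj.
exists l; split; last first.
  by apply: (pot HG) le; apply: (Dom HG tpdA) => //; rewrite eq_sym.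
split => //.
have := L1tau jk lj; rewrite tj stimes0r => /mle0 /stimes_eq0 [//|->] //.
Qed.

Lemma le_sub_sub (a b c d : G) : (a - b <= c - d) = (a + d <= c + b).
Proof.
rewrite (subr_le HG) -(leD2r HG _ _ d) -addrA (addrC b d) addrA subrK.
by [].
Qed.

Lemma arithX (mu o vj vl tj tl : G) : mu + vj <= o + vl -> o + tl <= mu + tj -> vj - tj <= vl - tl.
Proof.
move=> h1 h2; rewrite le_sub_sub.
have h := leD HG h1 h2.
have e1 : mu + vj + (o + tl) = (vj + tl) + (mu + o) by rewrite addrACA addrC.
have e2 : o + vl + (mu + tj) = (vl + tj) + (mu + o) by rewrite addrACA (addrC o mu) addrC.
by rewrite e1 e2 (leD2r HG) in h.
Qed.

Lemma arithY (a b : G) : (0 < a - b) = (b < a).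
Proof. by rewrite -(ltD2r HG 0 (a - b) b) subrK add0r. Qed.

Lemma claimA2 j : mle (v j) (tau j).
Proof.
pose nzb (a : smax G) := if a is SZero then false else true.
have nzbP a : nzb a <-> a <> SZero by case: a.
pose Pb := fun j => nzb (v j) && (smodg (tau j) < smodg (v j)).
suff nP : forall j, ~~ Pb j.
  case: (eq0_dec (v j)) => [->|nj]; first by left.
  have ntj : tau j <> SZero by move=> tj; apply: nj; apply: claimA1.
  right; split => //; move: (nP j); rewrite /Pb.
  have -> : nzb (v j) by apply/nzbP.
  by rewrite /= -(leNgtG HG).
move=> j0; apply/negP => Pj0.
pose e := fun j => smodg (v j) - smodg (tau j).
have [jm [Pjm hm]] := exists_max HG e (ex_intro _ j0 Pj0).
apply: (@climb _ HG _ (fun j => Pb j /\ e j = e jm) (fun j => mu j + smodg (v j) *+ 2) _ jm (conj Pjm erefl)).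
move=> {Pj0}j [/andP[/nzbP nj ltj] ej].
have jk : j != k by apply/eqP => ejk; move: ltj; rewrite ejk tau_k ltxx.
have [l [lj nl nvl le]] := row_succ jk nj.
have ntl : tau l <> SZero by move=> tl; apply: nvl; apply: claimA1.
have ntj : tau j <> SZero by move=> tj; apply: nj; apply: claimA1.
have le2 : om j l + smodg (tau l) <= mu j + smodg (tau j).
  case: (L1tau jk lj) => [/stimes_eq0 []//|[_]].
  by rewrite (@smodgM _ (B j l) (tau l) nl ntl) (@smodgM _ (B j j) (tau j) (nzB (j:=j)) ntj).
have ejl : e j <= e l.
  exact: arithX le le2.
have Pl : Pb l.
  rewrite /Pb; have -> : nzb (v l) by apply/nzbP.
  rewrite /= -arithY; apply: lt_le_trans ejl; by rewrite /e arithY.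
exists l; split; last first.
  by apply: (pot HG) le; apply: (Dom HG tpdA) => //; rewrite eq_sym.
by split => //; apply/eqP; rewrite eq_le hm // -ej ejl.
Qed.

Lemma claimB j : ssigned (tau j) -> v j = tau j.
Proof.
move=> sj; apply: NNPP => nj.
apply: (@climb _ HG _ (fun j => ssigned (tau j) /\ v j <> tau j)
          (fun j => mu j + smodg (tau j) *+ 2) _ j (conj sj nj)).
move=> {sj nj}j [sj nj].
have jk : j != k by apply/eqP => ejk; apply: nj; rewrite ejk tau_k.
have ntj : tau j <> SZero by move=> tj; apply: nj; rewrite tj; apply: claimA1.
have [sBj nBj] := Bjj_signed jk.
pose Y := B j j (x) tau j.
have sY : ssigned Y by apply: signedM.
have nY : Y <> SZero by apply: stimes_neq0.
have hsum := L2tau jk.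
pose tight l := B j l (x) tau l <> SZero /\ smodg (B j l (x) tau l) = smodg Y.
have tightE l : l != j -> tight l -> (-) (B j l (x) tau l) = Y.
  move=> lj [nt et]; apply: (big_top_eq HG hsum sY (i := l)) => //.
    by move/sopp_eq0.
  by rewrite smodg_opp.
case: (classic (exists l, [/\ l != j, tight l & ssigned (tau l) /\ v l <> tau l])).
  move=> [l [lj tl Ql]]; exists l; split => //.
  case: tl => nt et.
  have [nl ntl] : B j l <> SZero /\ tau l <> SZero by split => h; apply: nt; rewrite h ?stimes0l ?stimes0r.
  apply: (pot HG); first by apply: (Dom HG tpdA) => //; rewrite eq_sym.
  move: et; rewrite /Y.
  rewrite (@smodgM _ (B j l) (tau l) nl ntl) (@smodgM _ (B j j) (tau j) nBj ntj) => ->.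
  exact: lexx.
move=> nex; exfalso; apply: nj.
have tightV l : l != j -> tight l -> (-) (B j l (x) v l) = Y.
  move=> lj tl; have e := tightE l lj tl.
  have stl : ssigned (tau l).
    case: tl => nt _; have nl : B j l <> SZero by move=> h; apply: nt; rewrite h.
    apply: (signedM_invr nl); apply/signed_opp; by rewrite e.
  have -> : v l = tau l by apply: NNPP => hne; apply: nex; exists l.
  exact: e.
have hX : \big[@splus G/SZero]_(l | l != j) (-) (B j l (x) v l) = Y.
  apply: (big_eq_top HG).
    move=> l lj; case: (classic (tight l)) => tl.
      by left; apply: tightV.
    right; apply/mlt_oppl; apply: (mle_lt_trans (b := B j l (x) tau l)).
      by apply: (mle_mul HG); apply: claimA2.
    have h1 := L1tau jk lj.
    case: (eq0_dec (B j l (x) tau l)) => [->|nt]; first by left.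
    case: (classic (mlt (B j l (x) tau l) Y)) => // hn; exfalso.
    by apply: tl; split => //; case: (mle_nlt HG nt h1 hn).
  case: (big_attained HG (fun l => l != j) (fun l => (-) (B j l (x) tau l))) => [h0|[l [lj nt e]]].
    by move: h0; rewrite hsum.
  exists l => //; apply: tightV => //; split.
    by move=> h; apply: nt; rewrite h.
  by rewrite -(smodg_opp (B j l (x) tau l)) e hsum.
have hb := vb j; rewrite row_split in hb.
have e : \big[@splus G/SZero]_(l | l != j) (B j l (x) v l) = (-) Y.
  by rewrite -hX (sopp_big HG); apply: eq_bigr => l _; rewrite soppK.
rewrite e /Y -soppMr -stDr in hb.
have := bal_cancel sBj nBj hb.
exact: signed_bal_eq (vs j) sj.
Qed.

Lemma part3_main : ssigned lam /\ lam <> SZero /\ forall i, snabla (v i) (lam (x) t i).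
Proof.
have [s1 n1] := lam_prop; do 2! split => //.
move=> i; rewrite -/(tau i).
case: (boolP (isbal (tau i))) => hb.
  apply/snablaE; rewrite splusC'; apply: (splus_mle_bal HG).
    by apply/bal_opp; apply/balP.
  by apply/mle_sabs: (claimA2 i) => //; rewrite sabs_opp.
have si : ssigned (tau i) by move: hb; case: (tau i).
rewrite -(claimB si); exact: bal_sub.
Qed.

End Part3.

End S.

End P3.
Import P3.

Module P2.
Set Implicit Arguments. Unset Strict Implicit. Unset Printing Implicit Defensive.
Import Order.TTheory GRing.Theory.
Local Open Scope ring_scope.
Section S.
Variable G : porderZmodType.
Hypothesis HG : divOAG G.
Implicit Types a b c : smax G.

#[local] Lemma splusA' : associative (@splus G). Proof. exact: splusA HG. Qed.
Lemma splusC' : commutative (@splus G). Proof. exact: splusC HG. Qed.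
Lemma stDl : left_distributive (@stimes G) (@splus G). Proof. exact: stimesDl HG. Qed.
Lemma stDr : right_distributive (@stimes G) (@splus G). Proof. exact: stimesDr HG. Qed.
#[local] HB.instance Definition _ := Monoid.isComLaw.Build (smax G) SZero (@splus G) splusA' splusC' (@splus0l G).
#[local] HB.instance Definition _ := Monoid.isComLaw.Build (smax G) (sone G) (@stimes G) (@stimesA G) (@stimesC G) (@stimes1l G).
#[local] HB.instance Definition _ := Monoid.isMulLaw.Build (smax G) SZero (@stimes G) (@stimes0l G) (@stimes0r G).
#[local] HB.instance Definition _ := Monoid.isAddLaw.Build (smax G) (@stimes G) (@splus G) stDl stDr.

Ltac cmp1 :=
  match goal with
  | |- context [?x == ?y] =>
      let H := fresh "H" in
      case: (comparable_ltgtP (totG HG x y)) => H; try subst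
  end.

Ltac closelt :=
  match goal with
  | H : is_true (?a < ?a) |- _ => by rewrite ltxx in H
  | H1 : is_true (?a < ?b), H2 : is_true (?b < ?a) |- _ =>
      by move: (lt_trans H1 H2); rewrite ltxx
  | H1 : is_true (?a < ?b), H2 : is_true (?b <= ?a) |- _ =>
      by move: (lt_le_trans H1 H2); rewrite ltxx
  | H1 : is_true (?a < ?b), H2 : is_true (?b < ?c), H3 : is_true (?c < ?a) |- _ =>
      by move: (lt_trans (lt_trans H1 H2) H3); rewrite ltxx
  end.

Ltac smx := repeat (first [done | closelt | progress simpl | progress rewrite ?(eqD2r HG) ?(eqD2l HG) ?(ltD2r HG) ?(ltD2l HG) | cmp1 | progress (intros; subst) | congruence ]).

Local Notation "a (+) b" := (splus a b) (at level 50, left associativity).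
Local Notation "a (x) b" := (stimes a b) (at level 40, left associativity).
Local Notation "(-) a" := (sopp a) (at level 35).

Variables (m : nat) (A : 'M[smax G]_m.+1) (k : 'I_m.+1).
Hypothesis tpdA : tpd A.
Hypothesis simpleA : forall i, A i i = A k k -> i = k.
Implicit Types (s p : 'S_m.+1) (i j l x y : 'I_m.+1).

Local Notation B := (B A k).
Local Notation t := (t A k).
Local Notation mu := (mu A k).
Local Notation om := (om A k).
Local Notation W := (W A k).
Local Notation Pp := (Pp A k).
Local Notation T := (T A k).
Local Notation Kp := (Kp k).
Local Notation gam := (gam A k).

Definition nzb (a : smax G) := if a is SZero then false else true.
Lemma nzbP a : nzb a <-> a <> SZero. Proof. by case: a. Qed.

Definition Tight j l := [/\ l != j, B j l <> SZero, t l <> SZero &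
   om j l + smodg (t l) = mu j + smodg (t j)].

Lemma nzBjj j : B j j <> SZero.
Proof. exact: (Bii_neq0 tpdA simpleA). Qed.
Arguments nzBjj : clear implicits.

Lemma tight_ex j : j != k -> t j <> SZero -> exists l, Tight j l.
Proof.
move=> jk nj; have hs := L2 HG tpdA simpleA jk.
have nY : B j j (x) t j <> SZero by apply: stimes_neq0 => //; apply: nzBjj.
case: (big_attained HG (fun l => l != j) (fun l => (-) (B j l (x) t l))) => [h0|[l [lj nt e]]].
  by move: h0; rewrite hs.
have [nl ntl] : B j l <> SZero /\ t l <> SZero.
  by split => h; apply: nt; rewrite h ?stimes0l ?stimes0r.
exists l; split => //.
move: e; rewrite hs smodg_opp (@smodgM _ (B j l) (t l) nl ntl).
by rewrite (@smodgM _ (B j j) (t j) (nzBjj j) nj).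
Qed.

Lemma succ_ex : exists sc : 'I_m.+1 -> 'I_m.+1,
  forall j, j != k -> t j <> SZero -> Tight j (sc j).
Proof.
apply: (@fin_all_exists _ (fun _ => 'I_m.+1) (fun j l => j != k -> t j <> SZero -> Tight j l)).
move=> j; case: (classic (j != k /\ t j <> SZero)) => [[jk nj]|hn].
  by have [l hl] := tight_ex jk nj; exists l.
by exists k => jk nj; case: hn.
Qed.

Section Constr.
Variable sc : 'I_m.+1 -> 'I_m.+1.
Hypothesis hsc : forall j, j != k -> t j <> SZero -> Tight j (sc j).

Definition hh j := mu j + smodg (t j) *+ 2.
Definition Sj j := [pred l | nzb (t l) && (hh j < hh l)].
Definition d j := #|Sj j|.

Lemma hh_lt j : j != k -> t j <> SZero -> hh j < hh (sc j).
Proof.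
move=> jk nj; have [lj nl ntl e] := hsc jk nj.
apply: (pot HG); first by apply: (Dom HG tpdA) => //; rewrite eq_sym.
by rewrite e.
Qed.

Lemma d_lt j : j != k -> t j <> SZero -> (d (sc j) < d j)%N.
Proof.
move=> jk nj; apply: proper_card; apply/properP; split.
  apply/subsetP => x; rewrite !inE => /andP[-> hx] /=.
  exact: lt_trans (hh_lt jk nj) hx.
exists (sc j); last by rewrite inE ltxx andbF.
have [_ _ ntl _] := hsc jk nj.
by rewrite inE (hh_lt jk nj) andbT; apply/nzbP.
Qed.

Lemma d_le j : (d j <= m)%N.
Proof.
have : (#|Sj j| <= #|predC1 j|)%N.
  apply: subset_leq_card; apply/subsetP => x; rewrite !inE => /andP[_ hx].
  by apply/eqP => xj; move: hx; rewrite xj ltxx.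
by rewrite cardC1 card_ord.
Qed.

Definition C j l := (-) (sinv (B j j) (x) B j l).

Fixpoint F (N : nat) (j : 'I_m.+1) : smax G :=
  match N with
  | 0 => t j
  | N'.+1 => if (j == k) || ~~ nzb (t j) then t j else C j (sc j) (x) F N' (sc j)
  end.

Lemma F_stable : forall j N N', (d j < N)%N -> (d j < N')%N -> F N j = F N' j.
Proof.
suff: forall n j, (d j < n)%N -> forall N N', (d j < N)%N -> (d j < N')%N -> F N j = F N' j.
  by move=> h j; apply: (h (d j).+1).
elim=> [//|n IH] j hn [//|N] [//|N'] hN hN' /=.
case: ifP => // /norP [jk /negPn /nzbP nj].
have lt := d_lt jk nj.
by congr (_ (x) _); apply: IH; apply: leq_trans lt _.
Qed.

Lemma C_signed j l : j != k -> l != j -> ssigned (C j l).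
Proof.
move=> jk lj; apply/signed_opp; apply: signedM.
  by apply: sinv_signed; case: (Bii_signed tpdA simpleA jk).
by apply: (Boff_signed k tpdA); rewrite eq_sym.
Qed.

Lemma BC j l : j != k -> B j j (x) C j l = (-) (B j l).
Proof.
move=> jk; have [sj nj] := Bii_signed tpdA simpleA jk.
by rewrite /C soppMr stimesA (stimesC (B j j)) sinvK // stimes1l.
Qed.

Lemma F_prop : forall j N, (d j < N)%N ->
  [/\ ssigned (F N j), sabs (F N j) = sabs (t j) & (ssigned (t j) -> F N j = t j)].
Proof.
suff: forall n j, (d j < n)%N -> forall N, (d j < N)%N ->
  [/\ ssigned (F N j), sabs (F N j) = sabs (t j) & (ssigned (t j) -> F N j = t j)].
  by move=> h j; apply: (h (d j).+1).
elim=> [//|n IH] j hn [//|N] hN /=.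
case: ifP => [/orP hc|/norP [jk /negPn /nzbP nj]].
  split=> //; case: hc => [/eqP ->|/negP hz].
    exact: (proj1 (tk_signed HG tpdA simpleA)).
  by case E: (t j) hz.
have lt := d_lt jk nj.
have [lj nl ntl e] := hsc jk nj.
have [s1 a1 e1] := IH (sc j) (leq_trans lt hn) N (leq_trans lt hN).
have [sj nBj] := Bii_signed tpdA simpleA jk.
have nC : C j (sc j) <> SZero.
  by move/sopp_eq0/stimes_eq0 => [/(sinv_neq0 nBj)|].
split.
- by apply: signedM => //; apply: C_signed.
- rewrite sabsM a1 -sabsM; apply: sabs_smodg.
  + by apply: stimes_neq0.
  + done.
  rewrite (@smodgM _ _ _ nC ntl) /C smodg_opp (@smodgM _ _ _ (sinv_neq0 nBj) nl).
  rewrite smodg_sinv -addrA e addrA addNr add0r.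
  by [].
- move=> stj.
  have hs := L2 HG tpdA simpleA jk.
  have sY : ssigned (B j j (x) t j) by apply: signedM.
  have eY : (-) (B j (sc j) (x) t (sc j)) = B j j (x) t j.
    apply: (big_top_eq HG hs sY (i := sc j)) => //.
      by move/sopp_eq0/stimes_eq0 => [].
    rewrite smodg_opp (@smodgM _ _ _ nl ntl) (@smodgM _ _ _ nBj nj).
    exact: e.
  have stl : ssigned (t (sc j)).
    apply: (signedM_invr nl); apply/signed_opp; rewrite eY; exact: sY.
  rewrite (e1 stl) /C soppMl -stimesA -soppMr eY stimesA sinvK // stimes1l.
  by [].
Qed.

Definition vv j := F m.+1 j.

Lemma vv_prop j : [/\ ssigned (vv j), sabs (vv j) = sabs (t j) & (ssigned (t j) -> vv j = t j)].
Proof. apply: F_prop; rewrite ltnS; exact: d_le. Qed.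

Lemma vv_rec j : j != k -> t j <> SZero -> vv j = C j (sc j) (x) vv (sc j).
Proof.
move=> jk nj; rewrite /vv.
have hc : (j == k) || ~~ nzb (t j) = false.
  by apply/norP; split => //; apply/negPn/nzbP.
have -> : F m.+1 j = C j (sc j) (x) F m (sc j) by rewrite /= hc.
congr (_ (x) _); apply: F_stable.
  by apply: leq_trans (d_lt jk nj) (d_le j).
by apply: leq_trans (d_lt jk nj) _; apply: leq_trans (d_le j) _.
Qed.

Lemma vv_sabsM c j : sabs (c (x) vv j) = sabs (c (x) t j).
Proof. by rewrite !sabsM; case: (vv_prop j) => _ -> _. Qed.

Lemma vv_k : vv k = t k.
Proof. by case: (vv_prop k) => _ _ ->; case: (tk_signed HG tpdA simpleA). Qed.

Lemma bal_sub_mod a : a <> SZero -> a (+) (-) a <> SZero /\ smodg (a (+) (-) a) = smodg a.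
Proof. by case: a => [|x|x|x] //= _; rewrite eqxx. Qed.

Lemma rows j : sbalanced (smulv B vv j).
Proof.
rewrite (row_split HG); case: (eqVneq j k) => [->|jk].
  apply: (splus_mle_bal HG); first exact: bal_timesl (Bkk_bal k tpdA).
  apply: (mle_bigl HG) => l lk; rewrite vv_k.
  apply: (mle_sabs (a := B k l (x) t l) (b := B k k (x) t k)) => //.
    by rewrite vv_sabsM.
  exact: (L1k HG tpdA simpleA).
case: (eq0_dec (t j)) => [tj|nj].
  have vj : vv j = SZero by case: (vv_prop j) => _ _ ->; rewrite tj.
  rewrite vj stimes0r splus0l; apply: (bal_big HG) => l lj.
  have h := L1 HG tpdA simpleA jk lj; rewrite tj stimes0r in h.
  have z := mle0 h.
  have : sabs (B j l (x) vv l) = SZero by rewrite vv_sabsM z.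
  by move/sabs_eq0 ->.
have [lj nl ntl e] := hsc jk nj.
set l := sc j in lj nl ntl e *.
rewrite (bigD1 l) //= vv_rec // stimesA BC // soppMl splusA'.
set X := B j l (x) vv l.
have nX : X <> SZero.
  move/sabs_eq0; rewrite /X vv_sabsM => /sabs_eq0 /stimes_eq0; tauto.
have [na ma] := bal_sub_mod nX.
apply: (splus_mle_bal HG); first by rewrite splusC'; apply: bal_sub.
apply: (mle_bigl HG) => l' /andP[l'j l'l].
apply: (mle_trans (b := B j l' (x) t l')).
  apply: (mle_sabs (a := B j l' (x) t l') (b := B j l' (x) t l')) => //; first by rewrite vv_sabsM.
  exact: mle_refl.
apply: (mle_trans (L1 HG tpdA simpleA jk l'j)).
right; split; first by rewrite splusC'.
rewrite splusC' ma /X (smodg_sabs (vv_sabsM _ _)).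
rewrite (@smodgM _ _ _ nl ntl) (@smodgM _ _ _ (nzBjj j) nj) e.
exact: lexx.
Qed.

End Constr.

Lemma part2_main : exists v : 'I_m.+1 -> smax G, seigvec A gam v /\
   (forall i, sabs (v i) = sabs (t i)) /\ (forall i, ssigned (t i) -> v i = t i).
Proof.
have [sc hsc] := succ_ex.
exists (vv sc); split; last first.
  by split => i; case: (vv_prop hsc i).
split.
- by move=> i; case: (vv_prop hsc i).
- exists k; rewrite (vv_k hsc); exact: (proj2 (tk_signed HG tpdA simpleA)).
- by move=> i; apply/(eig_iff HG); apply: rows.
Qed.

End S.

End P2.
Import P2.

Theorem corollary5p2 (G : porderZmodType) (HG : divOAG G) (n : nat)
  (A : 'M[smax G]_n) (k : 'I_n) :
  tpd A ->
  (* gamma_i = a_ii ordered: gamma_1 >= ... >= gamma_n *)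
  (forall i j : 'I_n, (i <= j)%N -> sle (A j j) (A i i)) ->
  (* gamma = gamma_k is simple *)
  (forall i : 'I_n, A i i = A k k -> i = k) ->
  let gamma := A k k in
  let vk := fun i : 'I_n => sadj (sshift gamma A) i k in
  [/\ sweak_eigvec A gamma vk /\ ssigned (vk k) /\ vk k <> SZero,
      (exists v : 'I_n -> smax G, seigvec A gamma v /\
         (forall i, sabs (v i) = sabs (vk i)) /\
         (forall i, ssigned (vk i) -> v i = vk i)) &
      (forall v : 'I_n -> smax G, seigvec A gamma v ->
         exists lambda : smax G, ssigned lambda /\ lambda <> SZero /\
           (forall i, snabla (v i) (stimes lambda (vk i))))].
Proof.
case: n A k => [|m] A k; first by case: k.
move=> tpdA _ simpleA gamma vk.
have [stk ntk] := tk_signed HG tpdA simpleA.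
split.
- split; last by split.
  split; first by exists k.
  by move=> i; apply/(eig_iff HG); apply: (part1 HG tpdA simpleA).
- exact: (part2_main HG tpdA simpleA).
- move=> v [vs vnz veig].
  have vb : forall i, sbalanced (smulv (M1.B A k) v i).
    by move=> i; apply/(eig_iff HG).
  have [s1 [n1 h]] := part3_main HG tpdA simpleA vs vnz vb.
  by exists (lam A k v).
Qed.
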